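(* The discard categories $\mathbf{CPM}$ and $\mathbf{UCPM}$ are pseudo-purifiable. Moreover, in each of them, every purification is a pseudo-purification: if $f\in\mathcal C(A,B)$ and $p\in\mathcal C(A,B\otimes X)$ is pure with $f=(\mathrm{id}_B\otimes\top_X)\circ p$, then $p\in\mathrm{Pure}(f)$.
   Context: $\mathbf{CPM}$: objects are the matrix algebras $\mathcal M_{2^n\times2^n}(\mathbb C)$ ($n$ qubits), morphisms are completely positive linear maps, monoidal product is the tensor product, symmetry is the swap $\rho\otimes\nu\mapsto\nu\otimes\rho$, and the discard is the trace $\top:\rho\mapsto\mathrm{Tr}(\rho)$. $\mathbf{UCPM}$ is the subcategory of trace-preserving completely positive maps (with the same discard). A morphism is pure if it has the form $\rho\mapsto V\rho V^\dagger$ for a complex matrix $V$. A purification of $f$ is a pure $p$ with $f=(\mathrm{id}\otimes\top)\circ p$. A discard category is a symmetric monoidal category with, for each object $A$, a morphism $\top_A:A\to I$ with $\top_I=\mathrm{id}_I$ and $\top_{A\otimes B}=\top_A\otimes\top_B$; $f:A\to B$ is causal if $\top_B\circ f=\top_A$. A morphism $p\in\mathcal C(A,B\otimes X)$ is a pseudo-purification of $f\in\mathcal C(A,B)$, written $p\in\mathrm{Pure}(f)$, if for every object $Y$ and every $g\in\mathcal C(A,B\otimes Y)$ with $f=(\mathrm{id}_B\otimes\top_Y)\circ g$ there is a causal $c\in\mathcal C(X,Y)$ with $g=(\mathrm{id}_B\otimes c)\circ p$. The category is pseudo-purifiable if every morphism has a pseudo-purification and, for all $f_1\in\mathcal C(A_1,B_1\otimes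 C)$, $f_2\in\mathcal C(C\otimes A_2,B_2)$, $p_1\in\mathrm{Pure}(f_1)$ with $p_1:A_1\to B_1\otimes C\otimes X_1$ and $p_2\in\mathrm{Pure}(f_2)$ with $p_2:C\otimes A_2\to B_2\otimes X_2$, the morphism $(\mathrm{id}_{B_1\otimes B_2}\otimes\sigma_{X_2,X_1})\circ(\mathrm{id}_{B_1}\otimes p_2\otimes\mathrm{id}_{X_1})\circ(\mathrm{id}_{B_1\otimes C}\otimes\sigma_{X_1,A_2})\circ(p_1\otimes\mathrm{id}_{A_2})$ is a pseudo-purification of $(\mathrm{id}_{B_1}\otimes f_2)\circ(f_1\otimes\mathrm{id}_{A_2})$. *)

(* Defs.v *)
From HB Require Import structures.
From mathcomp Require Import all_boot all_order all_algebra.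
From mathcomp Require Import mxtens complex.
From mathcomp Require Import reals.

Set Implicit Arguments.
Unset Strict Implicit.
Unset Printing Implicit Defensive.

Import GRing.Theory Num.Theory.

Section CPMdefs.
Variable C : numClosedFieldType.

Definition mxadj m n (A : 'M[C]_(m, n)) : 'M[C]_(n, m) := (map_mx Num.conj A)^T.

Definition psd d (A : 'M[C]_d) : Prop :=
  forall v : 'cV[C]_d, (0 <= (mxadj v *m A *m v) 0 0)%R.

Definition linmap p q (f : 'M[C]_p -> 'M[C]_q) : Prop :=
  forall (a : C) x y, (f (a *: x + y) = a *: f x + f y)%R.

(* tensor product f (x) g of (linear) maps on matrix algebras, Kronecker
   convention of mxtens (index (i,k) |-> i * p2 + k):
   (f (x) g)(rho) = sum rho_{(i,k),(j,l)} f(E_ij) (x) g(E_kl). *)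
Definition tmap p1 q1 p2 q2 (f : 'M[C]_p1 -> 'M[C]_q1) (g : 'M[C]_p2 -> 'M[C]_q2)
  (rho : 'M[C]_(p1 * p2)) : 'M[C]_(q1 * q2) :=
  (\sum_(i < p1) \sum_(j < p1) \sum_(k < p2) \sum_(l < p2)
     rho (mxtens_index (i, k)) (mxtens_index (j, l)) *:
       (f (delta_mx i j) *t g (delta_mx k l)))%R.

Definition rswap p q (rho : 'M[C]_(p * q)) : 'M[C]_(q * p) :=
  (\sum_(i < p) \sum_(j < p) \sum_(k < q) \sum_(l < q)
     rho (mxtens_index (i, k)) (mxtens_index (j, l)) *:
       (delta_mx k l *t delta_mx i j))%R.

Definition completely_positive p q (f : 'M[C]_p -> 'M[C]_q) : Prop :=
  forall k (A : 'M[C]_(k * p)), psd A -> psd (tmap (@idfun 'M[C]_k) f A).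

(* ---- the categories: object n = n qubits = 'M_(2^n) ---- *)
Local Notation Mx n := 'M[C]_(2 ^ n).

Definition mor_pred := forall n m : nat, (Mx n -> Mx m) -> Prop.

Definition CPM : mor_pred := fun n m f => linmap f /\ completely_positive f.

Definition trace_preserving n m (f : Mx n -> Mx m) : Prop :=
  forall rho, (\tr (f rho) = \tr rho)%R.

Definition UCPM : mor_pred := fun n m f => CPM f /\ trace_preserving f.

(* identifying 'M_(2^n) and 'M_(2^n') along n = n' (associators/unitors) *)
Definition qcast n n' (e : n = n') (rho : Mx n) : Mx n' :=
  castmx (congr1 (expn 2) e, congr1 (expn 2) e) rho.

Definition ttens n1 m1 n2 m2 (f : Mx n1 -> Mx m1) (g : Mx n2 -> Mx m2)
  (rho : Mx (n1 + n2)) : Mx (m1 + m2) :=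
  castmx (esym (expnD 2 m1 m2), esym (expnD 2 m1 m2))
    (tmap f g (castmx (expnD 2 n1 n2, expnD 2 n1 n2) rho)).

Definition qswap a b (rho : Mx (a + b)) : Mx (b + a) :=
  castmx (esym (expnD 2 b a), esym (expnD 2 b a))
    (rswap (castmx (expnD 2 a b, expnD 2 a b) rho)).

Definition disc n (rho : Mx n) : Mx 0 := ((\tr rho)%:M)%R.

Definition ptr b y (rho : Mx (b + y)) : Mx b :=
  qcast (addn0 b) (ttens (@idfun (Mx b)) (@disc y) rho).

Definition causal n m (c : Mx n -> Mx m) : Prop :=
  forall rho, disc (c rho) = disc rho.

Definition pure n m (p : Mx n -> Mx m) : Prop :=
  exists V : 'M[C]_(2 ^ m, 2 ^ n), forall rho, (p rho = V *m rho *m mxadj V)%R.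

(* p \in Pure(f) in the discard category with morphisms M *)
Definition pseudo_pur (M : mor_pred) a b x (f : Mx a -> Mx b)
  (p : Mx a -> Mx (b + x)) : Prop :=
  M _ _ p /\
  forall y (g : Mx a -> Mx (b + y)), M _ _ g ->
    (forall rho, f rho = ptr (g rho)) ->
    exists c : Mx x -> Mx y,
      M _ _ c /\ causal c /\ forall rho, g rho = ttens (@idfun (Mx b)) c (p rho).

Lemma eq_assoc1 b1 c a2 x1 : b1 + c + (a2 + x1) = b1 + (c + a2) + x1.
Proof. by rewrite !addnA. Qed.

Lemma eq_assoc2 b1 b2 x2 x1 : b1 + (b2 + x2) + x1 = b1 + b2 + (x2 + x1).
Proof. by rewrite !addnA. Qed.

Definition seq_comp a1 b1 c a2 b2 (f1 : Mx a1 -> Mx (b1 + c))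
  (f2 : Mx (c + a2) -> Mx b2) (rho : Mx (a1 + a2)) : Mx (b1 + b2) :=
  ttens (@idfun (Mx b1)) f2
    (qcast (esym (addnA b1 c a2)) (ttens f1 (@idfun (Mx a2)) rho)).

(* (id (x) sigma_{X2,X1}) o (id_B1 (x) p2 (x) id_X1)
     o (id_{B1 (x) C} (x) sigma_{X1,A2}) o (p1 (x) id_A2) *)
Definition seq_comp_pur a1 b1 c a2 b2 x1 x2
  (p1 : Mx a1 -> Mx (b1 + c + x1)) (p2 : Mx (c + a2) -> Mx (b2 + x2))
  (rho : Mx (a1 + a2)) : Mx (b1 + b2 + (x1 + x2)) :=
  let s1 := ttens p1 (@idfun (Mx a2)) rho in
  let s2 := qcast (esym (addnA (b1 + c) x1 a2)) s1 in
  let s3 := ttens (@idfun (Mx (b1 + c))) (@qswap x1 a2) s2 in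
  let s4 := qcast (eq_assoc1 b1 c a2 x1) s3 in
  let s5 := ttens (ttens (@idfun (Mx b1)) p2) (@idfun (Mx x1)) s4 in
  let s6 := qcast (eq_assoc2 b1 b2 x2 x1) s5 in
  ttens (@idfun (Mx (b1 + b2))) (@qswap x2 x1) s6.

Definition pseudo_purifiable (M : mor_pred) : Prop :=
  (forall a b (f : Mx a -> Mx b), M _ _ f ->
     exists x (p : Mx a -> Mx (b + x)), pseudo_pur M f p) /\
  (forall a1 b1 c a2 b2 x1 x2 (f1 : Mx a1 -> Mx (b1 + c))
      (f2 : Mx (c + a2) -> Mx b2)
      (p1 : Mx a1 -> Mx (b1 + c + x1)) (p2 : Mx (c + a2) -> Mx (b2 + x2)),
     M _ _ f1 -> M _ _ f2 -> pseudo_pur M f1 p1 -> pseudo_pur M f2 p2 ->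
     pseudo_pur M (seq_comp f1 f2) (seq_comp_pur p1 p2)).

Definition purifications_pseudo (M : mor_pred) : Prop :=
  forall a b x (f : Mx a -> Mx b) (p : Mx a -> Mx (b + x)),
    M _ _ f -> M _ _ p -> pure p -> (forall rho, f rho = ptr (p rho)) ->
    pseudo_pur M f p.

End CPMdefs.

(* Main.v *)
Require Import Defs.
From HB Require Import structures.
From mathcomp Require Import all_boot all_order all_algebra.
From mathcomp Require Import mxtens complex.
From mathcomp Require Import reals.
From mathcomp Require Import ring.
From mathcomp Require Import spectral sesquilinear.

Set Implicit Arguments.
Unset Strict Implicit.
Unset Printing Implicit Defensive.

Import GRing.Theory Num.Theory.
Local Open Scope ring_scope.


Section Infra.
Variable C : numClosedFieldType.
Local Notation Mx n := 'M[C]_(2 ^ n).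

Section Lin.
Variables p q : nat.
Variable f : 'M[C]_p -> 'M[C]_q.
Hypothesis lf : linmap f.

Lemma lin0 : f 0 = 0.
Proof.
have h := lf 1 0 0; rewrite !scale1r addr0 in h.
by apply: (addrI (f 0)); rewrite addr0 -h.
Qed.

Lemma linD x y : f (x + y) = f x + f y.
Proof. by rewrite -{1}[x]scale1r lf scale1r. Qed.

Lemma linZ a x : f (a *: x) = a *: f x.
Proof. by rewrite -[a *: x]addr0 lf lin0 addr0. Qed.

Lemma lin_sum I (r : seq I) (P : pred I) (F : I -> 'M[C]_p) :
  f (\sum_(i <- r | P i) F i) = \sum_(i <- r | P i) f (F i).
Proof. exact: (big_morph f linD lin0). Qed.

End Lin.

Lemma linmapP p q (f : 'M[C]_p -> 'M[C]_q) :
  (forall x y, f (x + y) = f x + f y) -> (forall a x, f (a *: x) = a *: f x) ->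
  linmap f.
Proof. by move=> hD hZ a x y; rewrite hD hZ. Qed.

Lemma lin_comp p q r (f : 'M[C]_p -> 'M[C]_q) (g : 'M[C]_q -> 'M[C]_r) :
  linmap f -> linmap g -> linmap (g \o f).
Proof. by move=> lf lg a x y /=; rewrite lf lg. Qed.

Lemma lin_id p : linmap (@idfun 'M[C]_p).
Proof. by []. Qed.

Section Tens.
Variables m n p q : nat.

Lemma tensmxDl (A A' : 'M[C]_(m, n)) (B : 'M[C]_(p, q)) :
  (A + A') *t B = A *t B + A' *t B.
Proof. by apply/matrixP=> i j; rewrite !mxE mulrDl. Qed.

Lemma tensmxDr (A : 'M[C]_(m, n)) (B B' : 'M[C]_(p, q)) :
  A *t (B + B') = A *t B + A *t B'.
Proof. by apply/matrixP=> i j; rewrite !mxE mulrDr. Qed.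

Lemma tensmxZl a (A : 'M[C]_(m, n)) (B : 'M[C]_(p, q)) :
  (a *: A) *t B = a *: (A *t B).
Proof. by apply/matrixP=> i j; rewrite !mxE mulrA. Qed.

Lemma tensmxZr a (A : 'M[C]_(m, n)) (B : 'M[C]_(p, q)) :
  A *t (a *: B) = a *: (A *t B).
Proof. by apply/matrixP=> i j; rewrite !mxE mulrCA. Qed.

Lemma tensmx_suml I (r : seq I) (P : pred I) (F : I -> 'M[C]_(m, n))
  (B : 'M[C]_(p, q)) :
  (\sum_(i <- r | P i) F i) *t B = \sum_(i <- r | P i) (F i *t B).
Proof.
exact: (big_morph (fun A => A *t B) (fun x y => tensmxDl x y B) (tens0mx B)).
Qed.

Lemma tensmx_sumr I (r : seq I) (P : pred I) (F : I -> 'M[C]_(p, q))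
  (A : 'M[C]_(m, n)) :
  A *t (\sum_(i <- r | P i) F i) = \sum_(i <- r | P i) (A *t F i).
Proof.
exact: (big_morph (fun B => A *t B) (fun x y => tensmxDr A x y) (tensmx0 A)).
Qed.

End Tens.

Lemma tens_sum4 m1 n1 m2 n2 p1 q1 p2 q2
  (a : 'I_m1 -> 'I_n1 -> C) (b : 'I_m2 -> 'I_n2 -> C)
  (F : 'I_m1 -> 'I_n1 -> 'M[C]_(p1, q1)) (G : 'I_m2 -> 'I_n2 -> 'M[C]_(p2, q2)) :
  \sum_i \sum_j \sum_k \sum_l (a i j * b k l) *: (F i j *t G k l) =
  (\sum_i \sum_j a i j *: F i j) *t (\sum_k \sum_l b k l *: G k l).
Proof.
rewrite tensmx_suml; apply: eq_bigr=> i _.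
rewrite tensmx_suml; apply: eq_bigr=> j _.
rewrite tensmxZl tensmx_sumr scaler_sumr; apply: eq_bigr=> k _.
rewrite tensmx_sumr scaler_sumr; apply: eq_bigr=> l _.
by rewrite tensmxZr scalerA.
Qed.

Lemma tens_sum4' m1 n1 m2 n2 p1 q1 p2 q2
  (a : 'I_m1 -> 'I_n1 -> C) (b : 'I_m2 -> 'I_n2 -> C)
  (F : 'I_m1 -> 'I_n1 -> 'M[C]_(p1, q1)) (G : 'I_m2 -> 'I_n2 -> 'M[C]_(p2, q2)) :
  \sum_i \sum_j \sum_k \sum_l (a i j * b k l) *: (G k l *t F i j) =
  (\sum_k \sum_l b k l *: G k l) *t (\sum_i \sum_j a i j *: F i j).
Proof.
rewrite tensmx_sumr; apply: eq_bigr=> i _.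
rewrite tensmx_sumr; apply: eq_bigr=> j _.
rewrite tensmxZr tensmx_suml scaler_sumr; apply: eq_bigr=> k _.
rewrite tensmx_suml scaler_sumr; apply: eq_bigr=> l _.
by rewrite tensmxZl scalerA mulrC.
Qed.

Lemma tmap_tens p1 q1 p2 q2 (f : 'M[C]_p1 -> 'M[C]_q1) (g : 'M[C]_p2 -> 'M[C]_q2)
  (A : 'M[C]_p1) (B : 'M[C]_p2) :
  linmap f -> linmap g -> tmap f g (A *t B) = f A *t g B.
Proof.
move=> lf lg.
have eA : f A = \sum_i \sum_j A i j *: f (delta_mx i j).
  rewrite {1}(matrix_sum_delta A) (lin_sum lf); apply: eq_bigr=> i _.
  by rewrite (lin_sum lf); apply: eq_bigr=> j _; rewrite (linZ lf).
have eB : g B = \sum_i \sum_j B i j *: g (delta_mx i j).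
  rewrite {1}(matrix_sum_delta B) (lin_sum lg); apply: eq_bigr=> i _.
  by rewrite (lin_sum lg); apply: eq_bigr=> j _; rewrite (linZ lg).
rewrite eA eB -tens_sum4 /tmap; apply: eq_bigr=> i _; apply: eq_bigr=> j _.
by apply: eq_bigr=> k _; apply: eq_bigr=> l _; rewrite tensmxE.
Qed.

Lemma rswap_tens p1 p2 (A : 'M[C]_p1) (B : 'M[C]_p2) :
  rswap (A *t B) = B *t A.
Proof.
rewrite /rswap.
rewrite {2}(matrix_sum_delta A) {2}(matrix_sum_delta B).
rewrite -tens_sum4'; apply: eq_bigr=> i _; apply: eq_bigr=> j _.
by apply: eq_bigr=> k _; apply: eq_bigr=> l _; rewrite tensmxE.
Qed.

Lemma lin_tmap p1 q1 p2 q2 (f : 'M[C]_p1 -> 'M[C]_q1) (g : 'M[C]_p2 -> 'M[C]_q2) :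
  linmap (tmap f g).
Proof.
move=> a x y; rewrite /tmap scaler_sumr -big_split; apply: eq_bigr=> i _.
rewrite scaler_sumr -big_split; apply: eq_bigr=> j _.
rewrite scaler_sumr -big_split; apply: eq_bigr=> k _.
rewrite scaler_sumr -big_split; apply: eq_bigr=> l _.
by rewrite !mxE scalerDl scalerA.
Qed.

Lemma lin_rswap p1 p2 : linmap (@rswap C p1 p2).
Proof.
move=> a x y; rewrite /rswap scaler_sumr -big_split; apply: eq_bigr=> i _.
rewrite scaler_sumr -big_split; apply: eq_bigr=> j _.
rewrite scaler_sumr -big_split; apply: eq_bigr=> k _.
rewrite scaler_sumr -big_split; apply: eq_bigr=> l _.
by rewrite !mxE scalerDl scalerA.
Qed.

Lemma lin_castmx p p' (e : p = p') : linmap (castmx (e, e) : 'M[C]_p -> 'M[C]_p').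
Proof. by move=> a x y; apply/matrixP=> i j; rewrite !(castmxE, mxE). Qed.


Definition tens n m (A : Mx n) (B : Mx m) : Mx (n + m) :=
  castmx (esym (expnD 2 n m), esym (expnD 2 n m)) (A *t B).

Definition ti n m (i : 'I_(2 ^ n)) (k : 'I_(2 ^ m)) : 'I_(2 ^ (n + m)) :=
  cast_ord (esym (expnD 2 n m)) (mxtens_index (i, k)).

Lemma val_ti n m i k : val (@ti n m i k) = (i * 2 ^ m + k)%N.
Proof. by []. Qed.

Lemma eq_ti n m i k j l : (@ti n m i k == ti j l) = (i == j) && (k == l).
Proof.
apply/eqP/andP=> [h|[/eqP-> /eqP->]//].
move/cast_ord_inj: h => /(congr1 (@mxtens_unindex (2 ^ n) (2 ^ m))).
by rewrite !mxtens_indexK => -[-> ->].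
Qed.

Variant is_ti n m : 'I_(2 ^ (n + m)) -> Type :=
  IsTi (i : 'I_(2 ^ n)) (k : 'I_(2 ^ m)) : is_ti (ti i k).

Lemma tiP n m r : @is_ti n m r.
Proof.
have -> : r = ti (mxtens_unindex (cast_ord (expnD 2 n m) r)).1
                 (mxtens_unindex (cast_ord (expnD 2 n m) r)).2.
  by rewrite /ti -surjective_pairing mxtens_unindexK cast_ordK.
by constructor.
Qed.

Lemma tens_E n m (A : Mx n) (B : Mx m) i j k l :
  tens A B (ti i k) (ti j l) = A i j * B k l.
Proof.
rewrite /tens castmxE.
have e : forall (x : 'I_(2 ^ n)) (y : 'I_(2 ^ m)),
    cast_ord (esym (esym (expnD 2 n m))) (ti x y) = mxtens_index (x, y).
  by move=> x y; apply: val_inj.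
by rewrite !e tensmxE.
Qed.

Lemma sum_ti n m (F : 'I_(2 ^ (n + m)) -> C) :
  \sum_r F r = \sum_i \sum_k F (@ti n m i k).
Proof.
rewrite pair_big /=.
rewrite (reindex (fun p : 'I_(2 ^ n) * 'I_(2 ^ m) => ti p.1 p.2)) //=.
exists (fun r => mxtens_unindex (cast_ord (expnD 2 n m) r)) => [[i k] _|r _].
  by rewrite /= /ti cast_ordKV mxtens_indexK.
apply: (@cast_ord_inj _ _ (expnD 2 n m)); rewrite /ti cast_ordKV.
move: (cast_ord _ r) => x.
by rewrite -surjective_pairing mxtens_unindexK.
Qed.

Lemma delta_ti n m i j k l :
  delta_mx (@ti n m i k) (ti j l) = tens (delta_mx i j) (delta_mx k l) :> Mx (n + m).
Proof.
apply/matrixP=> r s; case: (tiP r)=> i' k'; case: (tiP s)=> j' l'.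
rewrite tens_E !mxE !eq_ti.
by case: (i' == i); case: (k' == k); case: (j' == j); case: (l' == l);
  rewrite /= ?mulr1 ?mulr0 ?mul0r.
Qed.

Lemma lin_tensl n m (B : Mx m) : linmap (fun A : Mx n => tens A B).
Proof.
move=> a x y; apply/matrixP=> r s; case: (tiP r)=> i k; case: (tiP s)=> j l.
by rewrite !(mxE, tens_E) mulrDl mulrA.
Qed.

Lemma lin_tensr n m (A : Mx n) : linmap (fun B : Mx m => tens A B).
Proof.
move=> a x y; apply/matrixP=> r s; case: (tiP r)=> i k; case: (tiP s)=> j l.
by rewrite !(mxE, tens_E) mulrDr mulrCA.
Qed.

Lemma lin_ext n m q (F G : Mx (n + m) -> 'M[C]_q) :
  linmap F -> linmap G -> (forall A B, F (tens A B) = G (tens A B)) ->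
  forall M, F M = G M.
Proof.
move=> lF lG h M; rewrite (matrix_sum_delta M) (lin_sum lF) (lin_sum lG).
apply: eq_bigr=> r _; rewrite (lin_sum lF) (lin_sum lG); apply: eq_bigr=> s _.
rewrite (linZ lF) (linZ lG); congr (_ *: _).
by case: (tiP r)=> i k; case: (tiP s)=> j l; rewrite delta_ti h.
Qed.

Lemma tens_suml n m I (r : seq I) (P : pred I) (F : I -> Mx n) (B : Mx m) :
  tens (\sum_(i <- r | P i) F i) B = \sum_(i <- r | P i) tens (F i) B.
Proof. exact: (lin_sum (lin_tensl B)). Qed.

Lemma tens_sumr n m I (r : seq I) (P : pred I) (F : I -> Mx m) (A : Mx n) :
  tens A (\sum_(i <- r | P i) F i) = \sum_(i <- r | P i) tens A (F i).
Proof. exact: (lin_sum (lin_tensr A)). Qed.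

Lemma tensZl n m a (A : Mx n) (B : Mx m) : tens (a *: A) B = a *: tens A B.
Proof. exact: (linZ (lin_tensl B)). Qed.

Lemma tensZr n m a (A : Mx n) (B : Mx m) : tens A (a *: B) = a *: tens A B.
Proof. exact: (linZ (lin_tensr A)). Qed.

Lemma ttens_tens n1 m1 n2 m2 (f : Mx n1 -> Mx m1) (g : Mx n2 -> Mx m2) A B :
  linmap f -> linmap g -> ttens f g (tens A B) = tens (f A) (g B).
Proof. by move=> lf lg; rewrite /ttens /tens castmxKV tmap_tens. Qed.

Lemma lin_ttens n1 m1 n2 m2 (f : Mx n1 -> Mx m1) (g : Mx n2 -> Mx m2) :
  linmap (ttens f g).
Proof.
move=> a x y; rewrite /ttens (lin_castmx _ a) lin_tmap.
by rewrite -(lin_castmx _ a).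
Qed.

Lemma lin_qcast n n' (e : n = n') : linmap (@qcast C n n' e).
Proof. exact: lin_castmx. Qed.

Lemma lin_qswap a b : linmap (@qswap C a b).
Proof.
move=> c x y; rewrite /qswap (lin_castmx _ c) lin_rswap.
by rewrite -(lin_castmx _ c).
Qed.

Lemma qswap_tens a b (A : Mx a) (B : Mx b) : qswap (tens A B) = tens B A.
Proof. by rewrite /qswap /tens castmxKV rswap_tens. Qed.

Lemma qcast_E n n' (e : n = n') (M : Mx n) r s :
  qcast e M r s = M (cast_ord (esym (congr1 (expn 2) e)) r)
                    (cast_ord (esym (congr1 (expn 2) e)) s).
Proof. by rewrite /qcast castmxE. Qed.

Ltac idx_eq := apply: val_inj => /=; rewrite ?expnD; ring.

Lemma qcastA1 n m k (e : (n + m + k = n + (m + k))%N) (A : Mx n) (B : Mx m) (D : Mx k) :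
  qcast e (tens (tens A B) D) = tens A (tens B D).
Proof.
apply/matrixP=> r s; case: (tiP r)=> i r'; case: (tiP r')=> j l.
case: (tiP s)=> i' s'; case: (tiP s')=> j' l'.
rewrite qcast_E.
have E x y z E' : cast_ord E' (@ti n (m + k) x (ti y z)) = ti (ti x y) z by idx_eq.
by rewrite !E !tens_E mulrA.
Qed.

Lemma qcastA2 n m k (e : (n + (m + k) = n + m + k)%N) (A : Mx n) (B : Mx m) (D : Mx k) :
  qcast e (tens A (tens B D)) = tens (tens A B) D.
Proof.
apply/matrixP=> r s; case: (tiP r)=> r' l; case: (tiP r')=> i j.
case: (tiP s)=> s' l'; case: (tiP s')=> i' j'.
rewrite qcast_E.
have E x y z E' : cast_ord E' (@ti (n + m) k (ti x y) z) = ti x (ti y z) by idx_eq.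
by rewrite !E !tens_E mulrA.
Qed.

Lemma qcast_as1 b1 c a2 x1 (e : (b1 + c + (a2 + x1) = b1 + (c + a2) + x1)%N)
  (B : Mx b1) (Cm : Mx c) (A2 : Mx a2) (X : Mx x1) :
  qcast e (tens (tens B Cm) (tens A2 X)) = tens (tens B (tens Cm A2)) X.
Proof.
apply/matrixP=> r s; case: (tiP r)=> r1 l; case: (tiP r1)=> i r2; case: (tiP r2)=> j k.
case: (tiP s)=> s1 l'; case: (tiP s1)=> i' s2; case: (tiP s2)=> j' k'.
rewrite qcast_E.
have E x y z w E' : cast_ord E' (@ti (b1 + (c + a2)) x1 (ti x (ti y z)) w) =
   ti (ti x y) (ti z w) by idx_eq.
by rewrite !E !tens_E !mulrA.
Qed.

Lemma qcast_as2 b1 b2 x2 x1 (e : (b1 + (b2 + x2) + x1 = b1 + b2 + (x2 + x1))%N)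
  (B : Mx b1) (B2 : Mx b2) (X2 : Mx x2) (X : Mx x1) :
  qcast e (tens (tens B (tens B2 X2)) X) = tens (tens B B2) (tens X2 X).
Proof.
apply/matrixP=> r s; case: (tiP r)=> r1 r2; case: (tiP r1)=> i j; case: (tiP r2)=> k l.
case: (tiP s)=> s1 s2; case: (tiP s1)=> i' j'; case: (tiP s2)=> k' l'.
rewrite qcast_E.
have E x y z w E' : cast_ord E' (@ti (b1 + b2) (x2 + x1) (ti x y) (ti z w)) =
   ti (ti x (ti y z)) w by idx_eq.
by rewrite !E !tens_E !mulrA.
Qed.

Lemma qcast_n0 n (e : (n + 0 = n)%N) (A : Mx n) (c : C) :
  qcast e (tens A (c%:M : Mx 0)) = c *: A.
Proof.
apply/matrixP=> r s; rewrite qcast_E.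
have E x E' : cast_ord E' x = @ti n 0 x ord0 by idx_eq.
by rewrite !E tens_E !mxE eqxx mulr1n mulrC.
Qed.

Lemma lin_disc n : linmap (@disc C n).
Proof.
move=> a x y; rewrite /disc mxtraceD mxtraceZ.
by apply/matrixP=> i j; rewrite !mxE mulrnDl mulrnAr.
Qed.

Lemma tr_tens n m (A : Mx n) (B : Mx m) : \tr (tens A B) = \tr A * \tr B.
Proof.
rewrite /mxtrace sum_ti mulr_suml; apply: eq_bigr=> i _.
by rewrite mulr_sumr; apply: eq_bigr=> k _; rewrite tens_E.
Qed.

Lemma ptr_tens b y (A : Mx b) (B : Mx y) : ptr (tens A B) = \tr B *: A.
Proof. by rewrite /ptr ttens_tens ?qcast_n0 //; apply: lin_disc. Qed.

Lemma lin_ptr b y : linmap (@ptr C b y).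
Proof. by move=> a x z; rewrite /ptr lin_ttens lin_qcast. Qed.


Lemma mxadjM m n p (A : 'M[C]_(m, n)) (B : 'M[C]_(n, p)) :
  mxadj (A *m B) = mxadj B *m mxadj A.
Proof. by rewrite /mxadj map_mxM trmx_mul. Qed.

Lemma mxadjD m n (A B : 'M[C]_(m, n)) : mxadj (A + B) = mxadj A + mxadj B.
Proof. by apply/matrixP=> i j; rewrite !mxE rmorphD. Qed.

Lemma mxadjZ m n a (A : 'M[C]_(m, n)) : mxadj (a *: A) = a^* *: mxadj A.
Proof. by apply/matrixP=> i j; rewrite !mxE rmorphM. Qed.

Lemma mxadj0 m n : mxadj (0 : 'M[C]_(m, n)) = 0.
Proof. by apply/matrixP=> i j; rewrite !mxE rmorph0. Qed.

Lemma mxadj_sum m n I (r : seq I) (P : pred I) (F : I -> 'M[C]_(m, n)) :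
  mxadj (\sum_(i <- r | P i) F i) = \sum_(i <- r | P i) mxadj (F i).
Proof. exact: (big_morph _ (@mxadjD m n) (mxadj0 m n)). Qed.

Lemma mxadjK m n (A : 'M[C]_(m, n)) : mxadj (mxadj A) = A.
Proof. by apply/matrixP=> i j; rewrite !mxE conjCK. Qed.

Lemma mxadjE m n (A : 'M[C]_(m, n)) i j : mxadj A i j = (A j i)^*.
Proof. by rewrite !mxE. Qed.

Lemma mxadj1 m : mxadj (1%:M : 'M[C]_m) = 1%:M.
Proof. by apply/matrixP=> i j; rewrite !mxE eq_sym rmorph_nat. Qed.

Lemma mxadj_delta m n (i : 'I_m) (j : 'I_n) : mxadj (delta_mx i j : 'M[C]_(m, n)) = delta_mx j i.
Proof. by apply/matrixP=> r s; rewrite !mxE rmorph_nat andbC. Qed.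

Lemma mxadj_tens m n p q (A : 'M[C]_(m, n)) (B : 'M[C]_(p, q)) :
  mxadj (A *t B) = mxadj A *t mxadj B.
Proof.
apply/matrixP=> r s; case: (mxtens_indexP r)=> i k; case: (mxtens_indexP s)=> j l.
by rewrite mxadjE !tensmxE !mxadjE rmorphM.
Qed.

Lemma mxadj_cast m n m' n' (e1 : m = m') (e2 : n = n') (A : 'M[C]_(m, n)) :
  mxadj (castmx (e1, e2) A) = castmx (e2, e1) (mxadj A).
Proof. by case: m' / e1; case: n' / e2; rewrite !castmx_id. Qed.

Lemma mul_castmx m n p m' n' p' (e1 : m = m') (e2 : n = n') (e3 : p = p')
  (A : 'M[C]_(m, n)) (B : 'M[C]_(n, p)) :
  castmx (e1, e2) A *m castmx (e2, e3) B = castmx (e1, e3) (A *m B).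
Proof. by case: m' / e1; case: n' / e2; case: p' / e3; rewrite !castmx_id. Qed.

Lemma tr_castmx m m' (e : m = m') (A : 'M[C]_m) : \tr (castmx (e, e) A) = \tr A.
Proof. by case: m' / e; rewrite castmx_id. Qed.

Lemma lin_ext_gen m n q (F G : 'M[C]_(m * n) -> 'M[C]_q) :
  linmap F -> linmap G -> (forall A B, F (A *t B) = G (A *t B)) ->
  forall M, F M = G M.
Proof.
move=> lF lG h M; rewrite (matrix_sum_delta M) (lin_sum lF) (lin_sum lG).
apply: eq_bigr=> r _; rewrite (lin_sum lF) (lin_sum lG); apply: eq_bigr=> s _.
rewrite (linZ lF) (linZ lG); congr (_ *: _).
case: (mxtens_indexP r)=> i k; case: (mxtens_indexP s)=> j l.
have -> : delta_mx (mxtens_index (i, k)) (mxtens_index (j, l)) =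
          delta_mx i j *t (delta_mx k l : 'M[C]_n).
  apply/matrixP=> r' s'.
  case: (mxtens_indexP r')=> i' k'; case: (mxtens_indexP s')=> j' l'.
  rewrite tensmxE !mxE.
  have eI : forall a b : nat, forall (x : 'I_a) (y : 'I_b) (z : 'I_a) (w : 'I_b),
      (mxtens_index (x, y) == mxtens_index (z, w)) = (x == z) && (y == w).
    move=> a b x y z w; apply/eqP/andP=> [|[/eqP-> /eqP->]//].
    by move/(congr1 (@mxtens_unindex a b)); rewrite !mxtens_indexK => -[-> ->].
  rewrite !eI.
  by case: (i' == i); case: (k' == k); case: (j' == j); case: (l' == l);
    rewrite /= ?mulr1 ?mulr0 ?mul0r.
by rewrite h.
Qed.

Definition kraus p q (I : finType) (K : I -> 'M[C]_(q, p)) (rho : 'M[C]_p) : 'M[C]_q :=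
  \sum_i K i *m rho *m mxadj (K i).

Lemma lin_kraus p q (I : finType) (K : I -> 'M[C]_(q, p)) : linmap (kraus K).
Proof.
move=> a x y; rewrite /kraus scaler_sumr -big_split; apply: eq_bigr=> i _.
by rewrite mulmxDr mulmxDl -scalemxAr -scalemxAl.
Qed.

Lemma tmap_id_kraus k p q (I : finType) (K : I -> 'M[C]_(q, p)) (A : 'M[C]_(k * p)) :
  tmap (@idfun 'M[C]_k) (kraus K) A = kraus (fun i => (1%:M : 'M[C]_k) *t K i) A.
Proof.
move: A; apply: lin_ext_gen; [exact: lin_tmap|exact: lin_kraus|] => A B.
rewrite tmap_tens //; [|exact: lin_kraus].
rewrite /kraus tensmx_sumr; apply: eq_bigr=> i _.
by rewrite tensmx_mul mxadj_tens mxadj1 tensmx_mul mul1mx mulmx1.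
Qed.

Lemma psd_kraus p q (I : finType) (K : I -> 'M[C]_(q, p)) (A : 'M[C]_p) :
  psd A -> psd (kraus K A).
Proof.
move=> hA v; rewrite /kraus mulmx_sumr mulmx_suml summxE.
apply: sumr_ge0=> i _.
have := hA (mxadj (K i) *m v); rewrite mxadjM mxadjK.
by rewrite !mulmxA.
Qed.

Lemma cp_kraus p q (I : finType) (K : I -> 'M[C]_(q, p)) :
  completely_positive (kraus K).
Proof. by move=> k A hA; rewrite tmap_id_kraus; apply: psd_kraus. Qed.

Lemma CPM_kraus n m (I : finType) (K : I -> 'M[C]_(2 ^ m, 2 ^ n)) :
  CPM (kraus K).
Proof. by split; [apply: lin_kraus|apply: cp_kraus]. Qed.

Lemma kraus_comp p q r (I J : finType) (K : I -> 'M[C]_(q, p)) (L : J -> 'M[C]_(r, q)) rho :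
  kraus L (kraus K rho) = kraus (fun ij : I * J => L ij.2 *m K ij.1) rho.
Proof.
rewrite /kraus (eq_bigr (fun j => \sum_i L j *m (K i *m rho *m mxadj (K i)) *m mxadj (L j))).
  rewrite exchange_big pair_big /=; apply: eq_bigr=> -[i j] _ /=.
  by rewrite mxadjM !mulmxA.
by move=> j _; rewrite mulmx_sumr mulmx_suml.
Qed.

Lemma mxtrace_sum m I (r : seq I) (P : pred I) (F : I -> 'M[C]_m) :
  \tr (\sum_(i <- r | P i) F i) = \sum_(i <- r | P i) \tr (F i).
Proof. exact: (big_morph _ (@mxtraceD _ _) (mxtrace0 _ _)). Qed.

Lemma tp_kraus p q (I : finType) (K : I -> 'M[C]_(q, p)) rho :
  \sum_i mxadj (K i) *m K i = 1%:M -> \tr (kraus K rho) = \tr rho.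
Proof.
move=> h; rewrite /kraus mxtrace_sum.
rewrite (eq_bigr (fun i => \tr ((mxadj (K i) *m K i) *m rho))); last first.
  by move=> i _; rewrite mxtrace_mulC mulmxA.
by rewrite -mxtrace_sum -mulmx_suml h mul1mx.
Qed.

End Infra.


Section Anal.
Variable C : numClosedFieldType.

Lemma entryD m n (A B : 'M[C]_(m, n)) i j : (A + B) i j = A i j + B i j.
Proof. by rewrite mxE. Qed.
Lemma entryZ m n a (A : 'M[C]_(m, n)) i j : (a *: A) i j = a * A i j.
Proof. by rewrite mxE. Qed.
Lemma entryN m n (A : 'M[C]_(m, n)) i j : (- A) i j = - A i j.
Proof. by rewrite mxE. Qed.
Lemma entryB m n (A B : 'M[C]_(m, n)) i j : (A - B) i j = A i j - B i j.
Proof. by rewrite mxE entryN. Qed.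
Lemma entry_sum m n I (r : seq I) (P : pred I) (F : I -> 'M[C]_(m, n)) i j :
  (\sum_(k <- r | P k) F k) i j = \sum_(k <- r | P k) F k i j.
Proof. exact: summxE. Qed.

Definition bform d (A : 'M[C]_d) (x y : 'cV[C]_d) := (mxadj x *m A *m y) 0 0.

Lemma bform_exp d (A : 'M[C]_d) x y c :
  bform A (x + c *: y) (x + c *: y) =
  bform A x x + c * bform A x y + c^* * bform A y x + c^* * c * bform A y y.
Proof.
rewrite /bform mxadjD mxadjZ !mulmxDl !mulmxDr -!scalemxAl -!scalemxAr.
rewrite !entryD !entryZ; ring.
Qed.

Lemma bform_delta d (A : 'M[C]_d) i j :
  bform A (delta_mx i 0) (delta_mx j 0) = A i j.
Proof. by rewrite /bform mxadj_delta -rowE -colE !mxE. Qed.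

Lemma psd_herm d (A : 'M[C]_d) : psd A -> forall i j, A j i = (A i j)^*.
Proof.
move=> hA i j.
have hc : forall z : 'cV[C]_d, (bform A z z)^* = bform A z z.
  by move=> z; apply: geC0_conj; apply: hA.
have h1 := hc (delta_mx i 0 + 1 *: delta_mx j 0).
have h2 := hc (delta_mx i 0 + 'i *: delta_mx j 0).
have hi := hc (delta_mx i 0); have hj := hc (delta_mx j 0).
rewrite !bform_exp !bform_delta in h1 h2 hi hj.
rewrite !(rmorphD, rmorphM, rmorphN) /= ?(conjCK, conjC1, conjCi) hi hj in h1 h2.
rewrite ?rmorphN /= ?conjCi ?opprK in h2.
set a := A i j in h1 h2 *; set b := A j i in h1 h2 *.
have E1 : a^* + b^* = a + b.
  transitivity ((A i i + 1 * a^* + 1 * b^* + 1 * 1 * A j j) - A i i - A j j); first ring.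
  rewrite h1; ring.
have E2 : 'i * (b^* - a^*) = 'i * (a - b).
  transitivity ((A i i + - 'i * a^* + 'i * b^* + 'i * - 'i * A j j) - A i i
     - ('i * - 'i) * A j j); first ring.
  rewrite h2; ring.
move/(mulfI (neq0Ci C)): E2 => E2.
have : b^* * 2%:R = a * 2%:R.
  transitivity ((a^* + b^*) + (b^* - a^*)); first ring.
  by rewrite E1 E2; ring.
move/(mulIf _) => h; have {h} <- : b^* = a by apply: h; rewrite pnatr_eq0.
by rewrite conjCK.
Qed.


End Anal.

Section Fact.
Variable C : numClosedFieldType.
Local Open Scope sesquilinear_scope.

Lemma mxadj_tc m n (A : 'M[C]_(m, n)) : mxadj A = A ^t*.
Proof. by rewrite /mxadj map_trmx. Qed.

Lemma mxadj_tcK m n (A : 'M[C]_(m, n)) : mxadj (A ^t*) = A.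
Proof. by rewrite mxadj_tc trmxCK. Qed.

Lemma psd_factor d (A : 'M[C]_d) : psd A -> exists B : 'M[C]_d, A = B *m mxadj B.
Proof.
move=> hA.
have hH : mxadj A = A by apply/matrixP=> i j; rewrite mxadjE -psd_herm.
have nA : A \is normalmx by apply/normalmxP; rewrite -mxadj_tc hH.
have /orthomx_spectralP eA := nA.
set S := spectralmx A in eA; set dd := spectral_diag A in eA.
have uS : S \is unitarymx := spectral_unitarymx A.
have iS : invmx S = S^t* := invmx_unitary uS.
have SS : S *m S^t* = 1%:M by apply/unitarymxP.
have SAS : S *m A *m S^t* = diag_mx dd.
  by rewrite eA iS !mulmxA SS mul1mx -mulmxA SS mulmx1.
have dpos : forall x, 0 <= dd 0 x.
  move=> x; have := hA (S^t* *m delta_mx x 0).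
  rewrite mxadjM mxadj_tcK mxadj_delta.
  rewrite !mulmxA -(mulmxA _ S) -(mulmxA _ (S *m A)).
  by rewrite SAS -rowE -colE !mxE eqxx mulr1n.
pose s := \row_x sqrtC (dd 0 x).
exists (S^t* *m diag_mx s).
have hs : mxadj (diag_mx s) = diag_mx s.
  apply/matrixP=> i j; rewrite mxadjE !mxE eq_sym rmorphMn /=.
  by case: eqP => [->|]; rewrite ?mulr0n // mulr1n geC0_conj // sqrtC_ge0.
rewrite mxadjM hs mxadj_tcK -mulmxA (mulmxA (diag_mx s)) mulmx_diag.
rewrite {1}eA iS !mulmxA; congr (_ *m _ *m _); congr diag_mx.
by apply/matrixP=> i j; rewrite !mxE ord1 -expr2 sqrtCK.
Qed.

Lemma mxE_triple m n p q (A : 'M[C]_(m, n)) (B : 'M[C]_(p, q)) i j k l :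
  (A *m delta_mx i j *m B) k l = A k i * B j l.
Proof.
rewrite -(mul_delta_mx (0 : 'I_1)) mulmxA -colE -mulmxA -rowE.
by rewrite !mxE big_ord1 !mxE.
Qed.

End Fact.

Section Choi.
Variable C : numClosedFieldType.

Lemma sum_delta_l n (F : 'I_n -> C) (a : 'I_n) : \sum_i (i == a)%:R * F i = F a.
Proof.
rewrite (bigD1 a) //= eqxx mul1r big1 ?addr0 // => i /negbTE ->.
by rewrite mul0r.
Qed.

Lemma mxtens_index_eq a b (x : 'I_a) (y : 'I_b) (z : 'I_a) (w : 'I_b) :
  (mxtens_index (x, y) == mxtens_index (z, w)) = (x == z) && (y == w).
Proof.
apply/eqP/andP=> [|[/eqP-> /eqP->]//].
by move/(congr1 (@mxtens_unindex a b)); rewrite !mxtens_indexK => -[-> ->].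
Qed.

Lemma psd_rank1 d (w : 'cV[C]_d) : psd (w *m mxadj w).
Proof.
move=> v.
have -> : mxadj v *m (w *m mxadj w) *m v = (mxadj v *m w) *m mxadj (mxadj v *m w).
  by rewrite mxadjM mxadjK !mulmxA.
set y := mxadj v *m w.
rewrite !mxE big_ord1 mxadjE; exact: mul_conjC_ge0.
Qed.

Lemma choi_kraus p q (f : 'M[C]_p -> 'M[C]_q) :
  linmap f -> completely_positive f ->
  exists K : 'I_(p * q) -> 'M[C]_(q, p), forall rho, f rho = kraus K rho.
Proof.
move=> lf cpf.
pose w : 'cV[C]_(p * p) :=
  \col_r ((mxtens_unindex r).1 == (mxtens_unindex r).2)%:R.
pose Om := w *m mxadj w.
have eOm : Om = \sum_a \sum_b (delta_mx a b *t delta_mx a b).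
  apply/matrixP=> r s; case: (mxtens_indexP r)=> i k; case: (mxtens_indexP s)=> j l.
  rewrite /Om mxE big_ord1 mxadjE !mxE !mxtens_indexK /= rmorph_nat.
  rewrite entry_sum (bigD1 i) //= [X in _ + X]big1 ?addr0; last first.
    move=> a /negbTE ha; rewrite entry_sum big1 // => b _.
    by rewrite tensmxE !mxE [i == a]eq_sym ha mul0r.
  rewrite entry_sum (bigD1 j) //= [X in _ + X]big1 ?addr0; last first.
    move=> b /negbTE hb; rewrite tensmxE !mxE [j == b]eq_sym hb andbF mul0r.
    by [].
  rewrite tensmxE !mxE !eqxx /= mul1r.
  by rewrite [k == i]eq_sym [l == j]eq_sym; case: (i == k); case: (j == l); rewrite ?mulr1 ?mulr0.
pose J := tmap (@idfun 'M[C]_p) f Om.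
have eJ : forall i j k l, J (mxtens_index (i, k)) (mxtens_index (j, l)) = f (delta_mx i j) k l.
  move=> i j k l; rewrite /J eOm (lin_sum (lin_tmap _ _)) entry_sum.
  rewrite (bigD1 i) //= [X in _ + X]big1 ?addr0; last first.
    move=> a /negbTE ha; rewrite (lin_sum (lin_tmap _ _)) entry_sum big1 // => b _.
    by rewrite tmap_tens // tensmxE !mxE [i == a]eq_sym ha mul0r.
  rewrite (lin_sum (lin_tmap _ _)) entry_sum (bigD1 j) //= [X in _ + X]big1 ?addr0; last first.
    move=> b /negbTE hb; rewrite tmap_tens // tensmxE !mxE [j == b]eq_sym hb andbF mul0r.
    by [].
  by rewrite tmap_tens // tensmxE !mxE !eqxx mul1r.
have psdJ : psd J by apply: cpf; apply: psd_rank1.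
have [B eB] := psd_factor psdJ.
exists (fun z => \matrix_(k, i) B (mxtens_index (i, k)) z) => rho.
rewrite (matrix_sum_delta rho) (lin_sum lf) (lin_sum (lin_kraus _)).
apply: eq_bigr=> i _; rewrite (lin_sum lf) (lin_sum (lin_kraus _)).
apply: eq_bigr=> j _; rewrite (linZ lf) (linZ (lin_kraus _)); congr (_ *: _).
apply/matrixP=> k l; rewrite -eJ eB /kraus entry_sum !mxE.
by apply: eq_bigr=> z _; rewrite mxE_triple !mxE.
Qed.

End Choi.

Section Freedom.
Variable C : numClosedFieldType.
Local Open Scope sesquilinear_scope.

Lemma mxadjN m n (A : 'M[C]_(m, n)) : mxadj (- A) = - mxadj A.
Proof. by apply/matrixP=> i j; rewrite !mxE rmorphN. Qed.

Lemma mxadjB m n (A B : 'M[C]_(m, n)) : mxadj (A - B) = mxadj A - mxadj B.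
Proof. by rewrite mxadjD mxadjN. Qed.

Lemma mm_adj_eq0 m n (M : 'M[C]_(m, n)) : M *m mxadj M = 0 -> M = 0.
Proof.
move=> h; apply/matrixP=> i k; rewrite mxE.
have /matrixP/(_ i i) := h; rewrite !mxE => h'.
have nn : forall j, xpredT j -> 0 <= M i j * mxadj M j i.
  by move=> j _; rewrite mxadjE mul_conjC_ge0.
have := @psumr_eq0P _ _ _ _ nn h' k isT.
by rewrite mxadjE => /eqP; rewrite mulf_eq0 conjC_eq0 orbb => /eqP.
Qed.

Lemma diag_adj n (d : 'rV[C]_n) : (forall x, 0 <= d 0 x) -> mxadj (diag_mx d) = diag_mx d.
Proof.
move=> hd; apply/matrixP=> i j; rewrite mxadjE !mxE eq_sym rmorphMn /=.
by case: eqP => [->|]; rewrite ?mulr0n // mulr1n geC0_conj.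
Qed.

Lemma freedom n r t (A : 'M[C]_(n, r)) (B : 'M[C]_(n, t)) :
  A *m mxadj A = B *m mxadj B ->
  exists T0 : 'M[C]_(r, t), exists P : 'M[C]_r,
    [/\ B = A *m T0, T0 *m mxadj T0 = P, A *m P = A, mxadj P = P & P *m P = P].
Proof.
move=> hAB.
pose H := mxadj A *m A.
have hH : mxadj H = H by rewrite /H mxadjM mxadjK.
have nH : H \is normalmx by apply/normalmxP; rewrite -mxadj_tc hH.
have /orthomx_spectralP eH := nH.
set S := spectralmx H in eH; set dd := spectral_diag H in eH.
have uS : S \is unitarymx := spectral_unitarymx H.
have iS : invmx S = S^t* := invmx_unitary uS.
have SS : S *m S^t* = 1%:M by apply/unitarymxP.
have StS : S^t* *m S = 1%:M by rewrite -[S^t*]mul1mx mulmxKtV.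
pose A0 := A *m S^t*.
have eA0 : A0 = A *m S^t* by [].
clearbody A0.
have aA0 : mxadj A0 = S *m mxadj A by rewrite eA0 mxadjM mxadj_tcK.
have hD : mxadj A0 *m A0 = diag_mx dd.
  rewrite aA0 eA0 mulmxA -(mulmxA S) -/H eH iS !mulmxA SS mul1mx.
  by rewrite -mulmxA SS mulmx1.
have hAA : A0 *m mxadj A0 = A *m mxadj A.
  by rewrite aA0 eA0 mulmxA -(mulmxA A) StS mulmx1.
have ddx : forall x, dd 0 x = \sum_k (A0 k x)^* * A0 k x.
  move=> x; have /matrixP/(_ x x) := hD; rewrite !mxE eqxx mulr1n => <-.
  by apply: eq_bigr=> k _; rewrite mxadjE.
have dpos : forall x, 0 <= dd 0 x.
  by move=> x; rewrite ddx; apply: sumr_ge0=> k _; rewrite mulrC mul_conjC_ge0.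
have dz : forall x k, dd 0 x = 0 -> A0 k x = 0.
  move=> x k; rewrite ddx => h.
  have nn : forall j, xpredT j -> 0 <= (A0 j x)^* * A0 j x.
    by move=> j _; rewrite mulrC mul_conjC_ge0.
  have := @psumr_eq0P _ _ _ _ nn h k isT.
  by move/eqP; rewrite mulf_eq0 conjC_eq0 orbb => /eqP.
pose e := \row_x (dd 0 x)^-1.
pose Dp := diag_mx e.
pose pp := \row_x ((dd 0 x)^-1 * dd 0 x).
pose P' := diag_mx pp.
have epos : forall x, 0 <= e 0 x by move=> x; rewrite mxE invr_ge0.
have ppos : forall x, 0 <= pp 0 x by move=> x; rewrite mxE mulr_ge0 ?invr_ge0.
have hP'1 : A0 *m P' = A0.
  apply/matrixP=> k x; rewrite mul_mx_diag mxE [pp _ _]mxE.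
  have [h0|hn] := eqVneq (dd 0 x) 0; first by rewrite (dz x k h0) mul0r.
  by rewrite mulVf // mulr1.
have hDpD : Dp *m diag_mx dd = P'.
  by rewrite mulmx_diag; congr diag_mx; apply/matrixP=> i j; rewrite !mxE.
pose Q := A0 *m Dp *m mxadj A0.
have eQ : Q = A0 *m Dp *m mxadj A0 by [].
clearbody Q.
have hQA : Q *m A0 = A0 by rewrite eQ -mulmxA hD -mulmxA hDpD hP'1.
have aDp : mxadj Dp = Dp by apply: diag_adj.
have hQadj : mxadj Q = Q by rewrite eQ !mxadjM mxadjK aDp mulmxA.
have hAQ : mxadj A0 *m Q = mxadj A0 by rewrite -{1}hQadj -mxadjM hQA.
have hQB : Q *m B = B.
  apply/eqP; rewrite -subr_eq0; apply/eqP; apply: mm_adj_eq0.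
  rewrite mxadjB mxadjM hQadj mulmxBl !mulmxBr.
  have BB : B *m mxadj B = A0 *m mxadj A0 by rewrite hAA.
  have e1 : Q *m B *m (mxadj B *m Q) = A0 *m mxadj A0.
    by rewrite !mulmxA -(mulmxA Q B) BB mulmxA hQA -mulmxA hAQ.
  have e2 : Q *m B *m mxadj B = A0 *m mxadj A0 by rewrite -mulmxA BB mulmxA hQA.
  have e3 : B *m (mxadj B *m Q) = A0 *m mxadj A0 by rewrite mulmxA BB -mulmxA hAQ.
  by rewrite e1 e2 e3 BB subrr.
pose T0' := Dp *m mxadj A0 *m B.
have hBT : B = A0 *m T0' by rewrite /T0' !mulmxA -eQ hQB.
have hTT : T0' *m mxadj T0' = P'.
  rewrite /T0' !mxadjM mxadjK aDp.
  have -> : Dp *m mxadj A0 *m B *m (mxadj B *m (A0 *m Dp)) =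
            Dp *m (mxadj A0 *m (B *m mxadj B) *m A0) *m Dp by rewrite !mulmxA.
  rewrite -hAB -hAA.
  have -> : Dp *m (mxadj A0 *m (A0 *m mxadj A0) *m A0) *m Dp =
     Dp *m (mxadj A0 *m A0) *m (mxadj A0 *m A0) *m Dp by rewrite !mulmxA.
  rewrite hD !mulmx_diag; congr diag_mx; apply/matrixP=> i j.
  rewrite !mxE; have [h0|hn] := eqVneq (dd 0 j) 0; first by rewrite h0 !(mulr0, mul0r).
  by rewrite -mulrA mulfV // mulr1.
exists (S^t* *m T0'), (S^t* *m P' *m S); split.
- by rewrite mulmxA -eA0.
- rewrite mxadjM mxadj_tcK -mulmxA (mulmxA T0') hTT; by rewrite mulmxA.
- by rewrite !mulmxA -eA0 hP'1 eA0 -mulmxA StS mulmx1.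
- by rewrite !mxadjM mxadj_tcK diag_adj // mxadj_tc mulmxA.
- rewrite -!mulmxA (mulmxA S) SS mul1mx (mulmxA P') mulmx_diag.
  congr (_ *m (diag_mx _ *m _)); apply/matrixP=> i j; rewrite !mxE.
  have [h0|hn] := eqVneq (dd 0 j) 0; first by rewrite h0 !(mulr0, mul0r).
  by rewrite mulVf // mulr1.
Qed.

End Freedom.


Section Pur.
Variable C : numClosedFieldType.
Local Notation Mx n := 'M[C]_(2 ^ n).

Lemma sum_mxtens m n (F : 'I_(m * n) -> C) :
  \sum_w F w = \sum_i \sum_k F (mxtens_index (i, k)).
Proof.
rewrite pair_big /=.
rewrite (reindex (fun p : 'I_m * 'I_n => mxtens_index (p.1, p.2))) //=.
exists (fun r => mxtens_unindex r) => [[i k] _|r _].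
  by rewrite /= mxtens_indexK.
by rewrite -surjective_pairing mxtens_unindexK.
Qed.

Lemma bilin_sum p q (I : finType) (X : I -> 'M[C]_(q, p)) (a b : I -> C) (rho : 'M[C]_p) :
  (\sum_z a z *: X z) *m rho *m mxadj (\sum_z b z *: X z) =
  \sum_z \sum_z' (a z * (b z')^*) *: (X z *m rho *m mxadj (X z')).
Proof.
rewrite mulmx_suml mulmx_suml; apply: eq_bigr=> z _.
rewrite mxadj_sum mulmx_sumr; apply: eq_bigr=> z' _.
by rewrite mxadjZ -scalemxAl -scalemxAl -scalemxAr scalerA.
Qed.

Definition unti n m (r : 'I_(2 ^ (n + m))) := mxtens_unindex (cast_ord (expnD 2 n m) r).

Lemma unti_ti n m i k : unti (@ti n m i k) = (i, k).
Proof. by rewrite /unti /ti cast_ordKV mxtens_indexK. Qed.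

Definition blk b x p (V : 'M[C]_(2 ^ (b + x), p)) (z : 'I_(2 ^ x)) : 'M[C]_(2 ^ b, p) :=
  \matrix_(i, c) V (ti i z) c.

Lemma blk_prod b x p (V W : 'M[C]_(2 ^ (b + x), p)) (M : 'M[C]_p) i z j z' :
  (V *m M *m mxadj W) (ti i z) (ti j z') = (blk V z *m M *m mxadj (blk W z')) i j.
Proof.
rewrite !mxE; apply: eq_bigr=> t _; rewrite !mxE; congr (_ * _).
by apply: eq_bigr=> c _; rewrite !mxE.
Qed.

Lemma ptr_E b y (M : Mx (b + y)) i j : ptr M i j = \sum_z M (ti i z) (ti j z).
Proof.
pose G (M : Mx (b + y)) : Mx b := \matrix_(i, j) \sum_z M (ti i z) (ti j z).
have lG : linmap G.
  move=> a u v; apply/matrixP=> r s; rewrite !mxE mulr_sumr -big_split.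
  by apply: eq_bigr=> z _; rewrite !mxE.
have := @lin_ext C b y (2 ^ b) (@ptr C b y) G (@lin_ptr C b y) lG.
move=> h; rewrite h; first by rewrite mxE.
move=> A B; rewrite ptr_tens; apply/matrixP=> r s; rewrite !mxE /mxtrace mulr_suml.
by apply: eq_bigr=> z _; rewrite tens_E mulrC.
Qed.

Lemma ttens_id_E b x y (c : Mx x -> Mx y) (M : Mx (b + x)) i y0 j y1 :
  linmap c ->
  ttens (@idfun (Mx b)) c M (ti i y0) (ti j y1) =
  \sum_z \sum_z' M (ti i z) (ti j z') * c (delta_mx z z') y0 y1.
Proof.
move=> lc.
pose G (M : Mx (b + x)) : Mx (b + y) := \matrix_(r, s)
  \sum_z \sum_z' M (ti (unti r).1 z) (ti (unti s).1 z') * c (delta_mx z z') (unti r).2 (unti s).2.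
have lG : linmap G.
  move=> a u v; apply/matrixP=> r s; rewrite !mxE mulr_sumr -big_split.
  apply: eq_bigr=> z _; rewrite mulr_sumr -big_split.
  by apply: eq_bigr=> z' _; rewrite entryD entryZ mulrDl mulrA.
have := @lin_ext C b x (2 ^ (b + y)) (ttens (@idfun (Mx b)) c) G (lin_ttens _ _) lG.
move=> h; rewrite h; first by rewrite mxE !unti_ti.
move=> A B; rewrite ttens_tens //; apply/matrixP=> r s.
case: (tiP r)=> i' y0'; case: (tiP s)=> j' y1'.
rewrite tens_E !mxE !unti_ti /=.
rewrite {1}(matrix_sum_delta B) (lin_sum lc) entry_sum mulr_sumr.
apply: eq_bigr=> z _; rewrite (lin_sum lc) entry_sum mulr_sumr.
by apply: eq_bigr=> z' _; rewrite (linZ lc) entryZ tens_E mulrA.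
Qed.

End Pur.

Section Pur2.
Variable C : numClosedFieldType.
Local Notation Mx n := 'M[C]_(2 ^ n).

Lemma sum_y0 n (y00 : 'I_n) (F : 'I_n -> C) :
  \sum_y0 ((y0 == y00)%:R * F y0) = F y00.
Proof.
rewrite (bigD1 y00) //= eqxx mul1r [X in _ + X]big1 ?addr0 // => i /negbTE ->.
by rewrite mul0r.
Qed.

Lemma pur_factor a b x y (V : 'M[C]_(2 ^ (b + x), 2 ^ a)) (g : Mx a -> Mx (b + y)) :
  CPM g -> (forall rho, ptr (g rho) = ptr (V *m rho *m mxadj V)) ->
  exists (I : finType) (U : I -> 'M[C]_(2 ^ y, 2 ^ x)),
    \sum_i mxadj (U i) *m U i = 1%:M /\
    forall rho, g rho = ttens (@idfun (Mx b)) (kraus U) (V *m rho *m mxadj V).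
Proof.
case=> lg cpg hfg.
have [G eG] := choi_kraus lg cpg.
pose t := (2 ^ a * 2 ^ (b + y))%N.
pose A : 'M[C]_(2 ^ b * 2 ^ a, 2 ^ x) :=
  \matrix_(r, z) V (ti (mxtens_unindex r).1 z) (mxtens_unindex r).2.
pose B : 'M[C]_(2 ^ b * 2 ^ a, t * 2 ^ y) :=
  \matrix_(r, w) G (mxtens_unindex w).1 (ti (mxtens_unindex r).1 (mxtens_unindex w).2)
                   (mxtens_unindex r).2.
have eA : forall i c z, A (mxtens_index (i, c)) z = V (ti i z) c.
  by move=> i c z; rewrite mxE mxtens_indexK.
have eB : forall i c j y0, B (mxtens_index (i, c)) (mxtens_index (j, y0)) = G j (ti i y0) c.
  by move=> i c j y0; rewrite mxE !mxtens_indexK.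
have hAB : A *m mxadj A = B *m mxadj B.
  apply/matrixP=> r s; case: (mxtens_indexP r)=> i c; case: (mxtens_indexP s)=> i' c'.
  have := congr1 (fun M : 'M[C]_(2 ^ b) => M i i') (hfg (delta_mx c c')).
  rewrite /= !ptr_E eG => h.
  rewrite mxE (eq_bigr (fun z => V (ti i z) c * (V (ti i' z) c')^*)); last first.
    by move=> z _; rewrite mxadjE !eA.
  rewrite mxE sum_mxtens.
  rewrite (eq_bigr (fun j => \sum_y0 G j (ti i y0) c * (G j (ti i' y0) c')^*)); last first.
    by move=> j _; apply: eq_bigr=> y0 _; rewrite mxadjE !eB.
  rewrite exchange_big /=.
  move: h; rewrite /kraus => h.
  have e1 : forall z, (\sum_j G j *m delta_mx c c' *m mxadj (G j)) (ti i z) (ti i' z) =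
      \sum_j G j (ti i z) c * (G j (ti i' z) c')^*.
    by move=> z; rewrite entry_sum; apply: eq_bigr=> j _; rewrite mxE_triple mxadjE.
  have e2 : forall z, (V *m delta_mx c c' *m mxadj V) (ti i z) (ti i' z) =
      V (ti i z) c * (V (ti i' z) c')^*.
    by move=> z; rewrite mxE_triple mxadjE.
  rewrite (eq_bigr _ (fun z _ => e1 z)) (eq_bigr _ (fun z _ => e2 z)) in h.
  by rewrite h.
have [T0 [P [hBT hTT hAP hPadj hPP]]] := freedom hAB.
pose X := blk V.
have hY : forall j y0, blk (G j) y0 = \sum_z T0 z (mxtens_index (j, y0)) *: X z.
  move=> j y0; apply/matrixP=> i c; rewrite entry_sum !mxE.
  rewrite -eB hBT mxE; apply: eq_bigr=> z _; rewrite eA entryZ !mxE mulrC.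
  by [].
pose Q : 'M[C]_(2 ^ x) := 1%:M - P.
have hAQ : A *m Q = 0 by rewrite /Q mulmxBr mulmx1 hAP subrr.
have hW : forall k, \sum_z Q z k *: X z = 0.
  move=> k; apply/matrixP=> i c; rewrite entry_sum [RHS]mxE.
  transitivity ((A *m Q) (mxtens_index (i, c)) k); last by rewrite hAQ mxE.
  by rewrite mxE; apply: eq_bigr=> z _; rewrite entryZ eA /X /blk mxE mulrC.
have hQQ : Q *m mxadj Q = Q.
  rewrite /Q mxadjB mxadj1 hPadj mulmxBl !mulmxBr mul1mx mulmx1 hPP.
  by rewrite mul1mx subrr subr0.
have y00 : 'I_(2 ^ y) by exists 0%N; rewrite expn_gt0.
pose U (u : ('I_t + 'I_(2 ^ x))%type) : 'M[C]_(2 ^ y, 2 ^ x) :=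
  match u with
  | inl j => \matrix_(y0, z) T0 z (mxtens_index (j, y0))
  | inr k => \matrix_(y0, z) ((y0 == y00)%:R * Q z k)
  end.
exists _, U; split.
  apply/matrixP=> z z'; rewrite big_sumType /= entryD !entry_sum.
  have eP : \sum_j (mxadj (U (inl j)) *m U (inl j)) z z' = P z' z.
    rewrite -hTT [RHS]mxE [RHS]sum_mxtens; apply: eq_bigr=> j _.
    by rewrite mxE; apply: eq_bigr=> y0 _; rewrite mxadjE !mxE mulrC.
  have eQ : \sum_k (mxadj (U (inr k)) *m U (inr k)) z z' = Q z' z.
    transitivity ((Q *m mxadj Q) z' z); last by rewrite hQQ.
    rewrite mxE; apply: eq_bigr=> k _.
    rewrite mxE (eq_bigr (fun y0 => (y0 == y00)%:R * ((Q z k)^* * Q z' k))).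
      by rewrite sum_y0 mxadjE mulrC.
    move=> y0 _; rewrite mxadjE !mxE rmorphM rmorph_nat /=.
    by case: (y0 == y00); rewrite ?mul1r ?mul0r.
  rewrite eP eQ /Q entryB addrC subrK !mxE eq_sym.
  by [].
move=> rho; rewrite eG; apply/matrixP=> r s.
case: (tiP r)=> i y0; case: (tiP s)=> i' y1.
rewrite ttens_id_E; last exact: lin_kraus.
rewrite /kraus entry_sum.
have e0 : forall k yy, \sum_z U (inr k) yy z *: X z = 0.
  move=> k yy; rewrite (eq_bigr (fun z => (yy == y00)%:R *: (Q z k *: X z))).
    by rewrite -scaler_sumr hW scaler0.
  by move=> z _; rewrite mxE scalerA.
transitivity (\sum_u ((\sum_z U u y0 z *: X z) *m rho *m mxadj (\sum_z U u y1 z *: X z)) i i').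
  rewrite big_sumType /= [X in _ = _ + X]big1 ?addr0; last first.
    by move=> k _; rewrite !e0 !mul0mx mxE.
  apply: eq_bigr=> j _; rewrite blk_prod !hY.
  by congr ((_ *m _ *m mxadj _) i i'); apply: eq_bigr=> z _; rewrite mxE.
rewrite (eq_bigr (fun u => \sum_z \sum_z' (U u y0 z * (U u y1 z')^*) *
                     (X z *m rho *m mxadj (X z')) i i')); last first.
  move=> u _; rewrite bilin_sum entry_sum; apply: eq_bigr=> z _.
  by rewrite entry_sum; apply: eq_bigr=> z' _; rewrite entryZ.
rewrite exchange_big; apply: eq_bigr=> z _.
rewrite exchange_big; apply: eq_bigr=> z' _ /=.
rewrite blk_prod entry_sum mulr_sumr; apply: eq_bigr=> u _.
by rewrite mxE_triple mxadjE mulrC.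
Qed.

End Pur2.


Section Nat.
Variable C : numClosedFieldType.
Local Notation Mx n := 'M[C]_(2 ^ n).

Lemma lin_compF p q r (f : 'M[C]_p -> 'M[C]_q) (g : 'M[C]_q -> 'M[C]_r) :
  linmap f -> linmap g -> linmap (fun x => g (f x)).
Proof. by move=> lf lg a x y; rewrite lf lg. Qed.

Lemma lin_Ftl n m q (F : Mx (n + m) -> 'M[C]_q) (B : Mx m) :
  linmap F -> linmap (fun A => F (tens A B)).
Proof. by move=> lF; apply: lin_compF => //; apply: lin_tensl. Qed.

Lemma lin_Ftr n m q (F : Mx (n + m) -> 'M[C]_q) (A : Mx n) :
  linmap F -> linmap (fun B => F (tens A B)).
Proof. by move=> lF; apply: lin_compF => //; apply: lin_tensr. Qed.

Lemma ext_l3 n m k q (F G : Mx (n + m + k) -> 'M[C]_q) :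
  linmap F -> linmap G ->
  (forall A B D, F (tens (tens A B) D) = G (tens (tens A B) D)) -> forall M, F M = G M.
Proof.
move=> lF lG h; apply: lin_ext => // M' D; move: M'.
by apply: lin_ext; [exact: lin_Ftl|exact: lin_Ftl|] => A B; apply: h.
Qed.

Lemma ext_r3 n m k q (F G : Mx (n + (m + k)) -> 'M[C]_q) :
  linmap F -> linmap G ->
  (forall A B D, F (tens A (tens B D)) = G (tens A (tens B D))) -> forall M, F M = G M.
Proof.
move=> lF lG h; apply: lin_ext => // A M'; move: M'.
by apply: lin_ext; [exact: lin_Ftr|exact: lin_Ftr|] => B D; apply: h.
Qed.

Lemma ext_lr n m k l q (F G : Mx (n + (m + k) + l) -> 'M[C]_q) :
  linmap F -> linmap G ->
  (forall A B D E, F (tens (tens A (tens B D)) E) = G (tens (tens A (tens B D)) E)) ->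
  forall M, F M = G M.
Proof.
move=> lF lG h; apply: lin_ext => // M' E; move: M'.
by apply: ext_r3; [exact: lin_Ftl|exact: lin_Ftl|] => A B D; apply: h.
Qed.

Lemma ext_22 n m k l q (F G : Mx (n + m + (k + l)) -> 'M[C]_q) :
  linmap F -> linmap G ->
  (forall A B D E, F (tens (tens A B) (tens D E)) = G (tens (tens A B) (tens D E))) ->
  forall M, F M = G M.
Proof.
move=> lF lG h; apply: lin_ext => // M1 M2; move: M1.
apply: lin_ext; [exact: lin_Ftl|exact: lin_Ftl|] => A B; move: M2.
by apply: lin_ext; [exact: lin_Ftr|exact: lin_Ftr|] => D E; apply: h.
Qed.

Lemma ext_lll n m k l q (F G : Mx (n + m + k + l) -> 'M[C]_q) :
  linmap F -> linmap G ->
  (forall A B D E, F (tens (tens (tens A B) D) E) = G (tens (tens (tens A B) D) E)) ->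
  forall M, F M = G M.
Proof.
move=> lF lG h; apply: lin_ext => // M' E; move: M'.
by apply: ext_l3; [exact: lin_Ftl|exact: lin_Ftl|] => A B D; apply: h.
Qed.


Ltac linT4 := repeat first [ assumption | exact: lin_id | exact: lin_ttens | exact: lin_qcast
  | exact: lin_qswap | exact: lin_ptr | exact: lin_disc | exact: lin_kraus | apply: lin_compF ].

Lemma ttens_ext n1 m1 n2 m2 (f f' : Mx n1 -> Mx m1) (g g' : Mx n2 -> Mx m2) :
  (forall x, f x = f' x) -> (forall x, g x = g' x) -> forall M, ttens f g M = ttens f' g' M.
Proof.
move=> ef eg M; rewrite /ttens /tmap; congr castmx.
apply: eq_bigr=> i _; apply: eq_bigr=> j _; apply: eq_bigr=> k _; apply: eq_bigr=> l _.
by rewrite ef eg.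
Qed.

Lemma ttens_comp n1 m1 k1 n2 m2 k2 (f : Mx n1 -> Mx m1) (f' : Mx k1 -> Mx n1)
  (g : Mx n2 -> Mx m2) (g' : Mx k2 -> Mx n2) :
  linmap f -> linmap f' -> linmap g -> linmap g' ->
  forall M, ttens f g (ttens f' g' M) = ttens (fun x => f (f' x)) (fun x => g (g' x)) M.
Proof.
move=> lf lf' lg lg'; apply: lin_ext; [linT4|linT4|] => A B.
by rewrite !ttens_tens //; linT4.
Qed.

Lemma ttens_idid n m (M : Mx (n + m)) : ttens (@idfun (Mx n)) (@idfun (Mx m)) M = M.
Proof.
move: M; apply: lin_ext; [linT4|exact: lin_id|] => A B.
by rewrite ttens_tens //; linT4.
Qed.

Lemma ptr_ttens_tp b x y (h : Mx x -> Mx y) :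
  linmap h -> (forall r, \tr (h r) = \tr r) ->
  forall M, ptr (ttens (@idfun (Mx b)) h M) = ptr M.
Proof.
move=> lh th; apply: lin_ext; [linT4|linT4|] => A B.
by rewrite ttens_tens ?ptr_tens ?th //; linT4.
Qed.

Lemma ptr_ttens_f n m x (f : Mx n -> Mx m) :
  linmap f -> forall M, ptr (ttens f (@idfun (Mx x)) M) = f (ptr M).
Proof.
move=> lf; apply: lin_ext; [linT4|linT4|] => A B.
by rewrite ttens_tens ?ptr_tens ?(linZ lf) //; linT4.
Qed.

Lemma ptr_qcast_as2 b1 b2 x2 x1 (e : (b1 + (b2 + x2) + x1 = b1 + b2 + (x2 + x1))%N) M :
  ptr (qcast e M) = ttens (@idfun (Mx b1)) (@ptr C b2 x2) (ptr M).
Proof.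
move: M; apply: ext_lr; [linT4|linT4|] => B B2 X2 X.
rewrite qcast_as2 !ptr_tens tr_tens (linZ (lin_ttens _ _)) ttens_tens; try linT4.
by rewrite ptr_tens tensZr scalerA mulrC.
Qed.

Lemma ptr_d b1 c x1 a2 (e2 : (b1 + c + x1 + a2 = b1 + c + (x1 + a2))%N)
  (e4 : (b1 + c + (a2 + x1) = b1 + (c + a2) + x1)%N) (e : (b1 + c + a2 = b1 + (c + a2))%N) M :
  ptr (qcast e4 (ttens (@idfun (Mx (b1 + c))) (@qswap C x1 a2) (qcast e2 M))) =
  qcast e (ttens (@ptr C (b1 + c) x1) (@idfun (Mx a2)) M).
Proof.
move: M; apply: ext_lll; [linT4|linT4|] => B Cm X A2.
rewrite qcastA1 ttens_tens; try linT4.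
rewrite qswap_tens qcast_as1 ptr_tens ttens_tens; try linT4.
by rewrite ptr_tens tensZl (linZ (lin_qcast _)) qcastA1.
Qed.

Lemma tr_qswap a b (M : Mx (a + b)) : \tr (qswap M) = \tr M.
Proof.
have h : forall M : Mx (a + b), disc (@qswap C a b M) = disc M.
  apply: lin_ext; [linT4|linT4|] => A B.
  by rewrite qswap_tens /disc !tr_tens mulrC.
by have := h M; rewrite /disc => /matrixP/(_ 0 0); rewrite !mxE.
Qed.

Lemma ptr_seq_comp_pur a1 b1 c a2 b2 x1 x2
  (P1 : Mx a1 -> Mx (b1 + c + x1)) (P2 : Mx (c + a2) -> Mx (b2 + x2)) :
  linmap P1 -> linmap P2 ->
  forall rho, ptr (seq_comp_pur P1 P2 rho) =
    seq_comp (fun r => ptr (P1 r)) (fun r => ptr (P2 r)) rho.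
Proof.
move=> l1 l2 rho; rewrite /seq_comp_pur /seq_comp.
rewrite ptr_ttens_tp; [|linT4|exact: tr_qswap].
rewrite ptr_qcast_as2 ptr_ttens_f; last by linT4.
rewrite ttens_comp; try linT4.
rewrite (@ptr_d b1 c x1 a2 _ _ (esym (addnA b1 c a2))) ttens_comp; try linT4.
rewrite [LHS](ttens_ext (f' := idfun) (g' := fun r => ptr (P2 r))) //.
Qed.


Lemma nat_s2 n m k l (d : Mx m -> Mx l) (e : (n + m + k = n + (m + k))%N)
  (e' : (n + l + k = n + (l + k))%N) M :
  linmap d ->
  qcast e' (ttens (ttens (@idfun (Mx n)) d) (@idfun (Mx k)) M) =
  ttens (@idfun (Mx n)) (ttens d (@idfun (Mx k))) (qcast e M).
Proof.
move=> ld; move: M; apply: ext_l3; [linT4|linT4|] => A B D.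
rewrite !ttens_tens; try linT4.
by rewrite !qcastA1 !ttens_tens; linT4.
Qed.

Lemma nat_s3 n x1 a2 z1 (d1 : Mx x1 -> Mx z1) M :
  linmap d1 ->
  ttens (@idfun (Mx n)) (@qswap C z1 a2) (ttens (@idfun (Mx n)) (ttens d1 (@idfun (Mx a2))) M) =
  ttens (@idfun (Mx n)) (ttens (@idfun (Mx a2)) d1) (ttens (@idfun (Mx n)) (@qswap C x1 a2) M).
Proof.
move=> ld; move: M; apply: ext_r3; [linT4|linT4|] => A X A2.
rewrite !ttens_tens; try linT4.
by rewrite !qswap_tens !ttens_tens; linT4.
Qed.

Lemma nat_s4 b1 c a2 x1 z1 (d1 : Mx x1 -> Mx z1)
  (e : (b1 + c + (a2 + x1) = b1 + (c + a2) + x1)%N)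
  (e' : (b1 + c + (a2 + z1) = b1 + (c + a2) + z1)%N) M :
  linmap d1 ->
  qcast e' (ttens (@idfun (Mx (b1 + c))) (ttens (@idfun (Mx a2)) d1) M) =
  ttens (@idfun (Mx (b1 + (c + a2)))) d1 (qcast e M).
Proof.
move=> ld; move: M; apply: ext_22; [linT4|linT4|] => B Cm A2 X.
rewrite !ttens_tens; try linT4.
by rewrite !qcast_as1 !ttens_tens; linT4.
Qed.

Lemma nat_s5 b1 c a2 x1 z1 b2 x2 z2 (d1 : Mx x1 -> Mx z1) (d2 : Mx x2 -> Mx z2)
  (p2 : Mx (c + a2) -> Mx (b2 + x2)) M :
  linmap d1 -> linmap d2 -> linmap p2 ->
  ttens (ttens (@idfun (Mx b1)) (fun r => ttens (@idfun (Mx b2)) d2 (p2 r))) (@idfun (Mx z1))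
     (ttens (@idfun (Mx (b1 + (c + a2)))) d1 M) =
  ttens (ttens (@idfun (Mx b1)) (ttens (@idfun (Mx b2)) d2)) d1
     (ttens (ttens (@idfun (Mx b1)) p2) (@idfun (Mx x1)) M).
Proof.
move=> l1 l2 lp; move: M; apply: ext_l3; [linT4|linT4|] => B N X.
rewrite !ttens_tens; try linT4.
by [].
Qed.

Lemma nat_s6 b1 b2 x2 z2 x1 z1 (d1 : Mx x1 -> Mx z1) (d2 : Mx x2 -> Mx z2)
  (e : (b1 + (b2 + x2) + x1 = b1 + b2 + (x2 + x1))%N)
  (e' : (b1 + (b2 + z2) + z1 = b1 + b2 + (z2 + z1))%N) M :
  linmap d1 -> linmap d2 ->
  qcast e' (ttens (ttens (@idfun (Mx b1)) (ttens (@idfun (Mx b2)) d2)) d1 M) =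
  ttens (@idfun (Mx (b1 + b2))) (ttens d2 d1) (qcast e M).
Proof.
move=> l1 l2; move: M; apply: ext_lr; [linT4|linT4|] => B B2 X2 X.
rewrite !ttens_tens; try linT4.
by rewrite !qcast_as2 !ttens_tens; linT4.
Qed.

Lemma nat_s7 n x2 x1 z2 z1 (d1 : Mx x1 -> Mx z1) (d2 : Mx x2 -> Mx z2) M :
  linmap d1 -> linmap d2 ->
  ttens (@idfun (Mx n)) (@qswap C z2 z1) (ttens (@idfun (Mx n)) (ttens d2 d1) M) =
  ttens (@idfun (Mx n)) (ttens d1 d2) (ttens (@idfun (Mx n)) (@qswap C x2 x1) M).
Proof.
move=> l1 l2; move: M; apply: ext_r3; [linT4|linT4|] => A X2 X.
rewrite !ttens_tens; try linT4.
by rewrite !qswap_tens !ttens_tens; linT4.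
Qed.

Lemma seq_comp_pur_ext a1 b1 c a2 b2 x1 x2
  (p1 q1 : Mx a1 -> Mx (b1 + c + x1)) (p2 q2 : Mx (c + a2) -> Mx (b2 + x2)) :
  (forall r, p1 r = q1 r) -> (forall r, p2 r = q2 r) ->
  forall rho, seq_comp_pur p1 p2 rho = seq_comp_pur q1 q2 rho.
Proof.
move=> e1 e2 rho; rewrite /seq_comp_pur.
rewrite (ttens_ext (f' := q1) (g' := idfun)) //.
congr (ttens _ _ (qcast _ _)).
by apply: ttens_ext => // r; apply: ttens_ext.
Qed.

Lemma seq_comp_ext a1 b1 c a2 b2
  (f1 g1 : Mx a1 -> Mx (b1 + c)) (f2 g2 : Mx (c + a2) -> Mx b2) :
  (forall r, f1 r = g1 r) -> (forall r, f2 r = g2 r) ->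
  forall rho, seq_comp f1 f2 rho = seq_comp g1 g2 rho.
Proof.
move=> e1 e2 rho; rewrite /seq_comp.
rewrite (ttens_ext (f' := g1) (g' := idfun)) //.
by apply: ttens_ext.
Qed.

Lemma nat_seq_comp_pur a1 b1 c a2 b2 x1 x2 z1 z2
  (p1 : Mx a1 -> Mx (b1 + c + x1)) (p2 : Mx (c + a2) -> Mx (b2 + x2))
  (d1 : Mx x1 -> Mx z1) (d2 : Mx x2 -> Mx z2) :
  linmap p1 -> linmap p2 -> linmap d1 -> linmap d2 ->
  forall rho,
  seq_comp_pur (fun r => ttens (@idfun (Mx (b1 + c))) d1 (p1 r))
               (fun r => ttens (@idfun (Mx b2)) d2 (p2 r)) rho =
  ttens (@idfun (Mx (b1 + b2))) (ttens d1 d2) (seq_comp_pur p1 p2 rho).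
Proof.
move=> lp1 lp2 ld1 ld2 rho; rewrite /seq_comp_pur.
have h1 : ttens (fun r => ttens (@idfun (Mx (b1 + c))) d1 (p1 r)) (@idfun (Mx a2)) rho =
          ttens (ttens (@idfun (Mx (b1 + c))) d1) (@idfun (Mx a2)) (ttens p1 idfun rho).
  by rewrite ttens_comp; try linT4; apply: ttens_ext.
rewrite h1.
rewrite (@nat_s2 (b1 + c) x1 a2 z1 d1 (esym (addnA (b1 + c) x1 a2))
            (esym (addnA (b1 + c) z1 a2))); last by [].
rewrite nat_s3 //.
rewrite (@nat_s4 b1 c a2 x1 z1 d1 (eq_assoc1 b1 c a2 x1) (eq_assoc1 b1 c a2 z1)) //.
rewrite nat_s5 //.
rewrite (@nat_s6 b1 b2 x2 z2 x1 z1 d1 d2 (eq_assoc2 b1 b2 x2 x1) (eq_assoc2 b1 b2 z2 z1)) //.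
by rewrite nat_s7.
Qed.

End Nat.


Section Clo.
Variable C : numClosedFieldType.
Local Notation Mx n := 'M[C]_(2 ^ n).

Ltac linT5 := repeat first [ assumption | exact: lin_id | exact: lin_ttens | exact: lin_qcast
  | exact: lin_qswap | exact: lin_ptr | exact: lin_disc | exact: lin_kraus | apply: lin_compF ].

Lemma tmap_ext p1 q1 p2 q2 (f f' : 'M[C]_p1 -> 'M[C]_q1) (g g' : 'M[C]_p2 -> 'M[C]_q2) :
  (forall x, f x = f' x) -> (forall x, g x = g' x) -> forall M, tmap f g M = tmap f' g' M.
Proof.
move=> ef eg M; rewrite /tmap.
apply: eq_bigr=> i _; apply: eq_bigr=> j _; apply: eq_bigr=> k _; apply: eq_bigr=> l _.
by rewrite ef eg.
Qed.

Lemma CPM_ext n m (f g : Mx n -> Mx m) : CPM f -> (forall x, f x = g x) -> CPM g.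
Proof.
move=> [lf cf] e; split.
  by move=> a x y; rewrite -!e lf.
move=> k A hA; rewrite -(tmap_ext (f := idfun) (g := f)) //.
exact: cf.
Qed.

Definition isKraus n m (f : Mx n -> Mx m) :=
  exists (I : finType) (K : I -> 'M[C]_(2 ^ m, 2 ^ n)), forall rho, f rho = kraus K rho.

Lemma CPM_isKraus n m (f : Mx n -> Mx m) : CPM f <-> isKraus f.
Proof.
split=> [[lf cf]|[I [K eK]]].
  by have [K eK] := choi_kraus lf cf; exists _, K.
by apply: (CPM_ext (CPM_kraus K)) => x; rewrite eK.
Qed.

Lemma lin_ad p q (V : 'M[C]_(q, p)) : linmap (fun rho => V *m rho *m mxadj V).
Proof. by move=> a x y; rewrite mulmxDr mulmxDl -scalemxAr -scalemxAl. Qed.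

Lemma kraus1 p q (V : 'M[C]_(q, p)) rho :
  kraus (fun _ : 'I_1 => V) rho = V *m rho *m mxadj V.
Proof. by rewrite /kraus big_ord1. Qed.

Lemma pure_isKraus n m (f : Mx n -> Mx m) : pure f -> isKraus f.
Proof.
by move=> [V eV]; exists _, (fun _ : 'I_1 => V) => rho; rewrite kraus1 eV.
Qed.

Definition tensop m1 n1 m2 n2 (V : 'M[C]_(2 ^ m1, 2 ^ n1)) (W : 'M[C]_(2 ^ m2, 2 ^ n2)) :
  'M[C]_(2 ^ (m1 + m2), 2 ^ (n1 + n2)) :=
  castmx (esym (expnD 2 m1 m2), esym (expnD 2 n1 n2)) (V *t W).

Lemma tens_conj m1 n1 m2 n2 (V : 'M[C]_(2 ^ m1, 2 ^ n1)) (W : 'M[C]_(2 ^ m2, 2 ^ n2)) A B :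
  tensop V W *m tens A B *m mxadj (tensop V W) =
  tens (V *m A *m mxadj V) (W *m B *m mxadj W).
Proof.
rewrite /tensop /tens mxadj_cast !mul_castmx.
by rewrite mxadj_tens !tensmx_mul.
Qed.

Lemma ttens_kraus n1 m1 n2 m2 (I J : finType) (K : I -> 'M[C]_(2 ^ m1, 2 ^ n1))
  (L : J -> 'M[C]_(2 ^ m2, 2 ^ n2)) rho :
  ttens (kraus K) (kraus L) rho = kraus (fun p : I * J => tensop (K p.1) (L p.2)) rho.
Proof.
move: rho; apply: lin_ext; [exact: lin_ttens|exact: lin_kraus|] => A B.
rewrite ttens_tens; try exact: lin_kraus.
rewrite /kraus tens_suml (eq_bigr (fun i => \sum_j tens (K i *m A *m mxadj (K i))
  (L j *m B *m mxadj (L j)))); last by move=> i _; rewrite tens_sumr.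
by rewrite pair_bigA /=; apply: eq_bigr=> -[i j] _; rewrite tens_conj.
Qed.

Lemma ttens_ad n1 m1 n2 m2 (V : 'M[C]_(2 ^ m1, 2 ^ n1)) (W : 'M[C]_(2 ^ m2, 2 ^ n2)) rho :
  ttens (fun r => V *m r *m mxadj V) (fun r => W *m r *m mxadj W) rho =
  tensop V W *m rho *m mxadj (tensop V W).
Proof.
move: rho; apply: lin_ext; [exact: lin_ttens|exact: lin_ad|] => A B.
by rewrite ttens_tens ?tens_conj //; apply: lin_ad.
Qed.

Lemma sum_ti_delta n m (i : 'I_(2 ^ n)) (k : 'I_(2 ^ m)) (F : 'I_(2 ^ n) -> 'I_(2 ^ m) -> C) :
  \sum_i0 \sum_k0 ((i == i0) && (k == k0))%:R * F i0 k0 = F i k.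
Proof.
rewrite (eq_bigr (fun i0 => (i0 == i)%:R * \sum_k0 (k0 == k)%:R * F i0 k0)).
  by rewrite sum_delta_l sum_delta_l.
move=> i0 _; rewrite mulr_sumr; apply: eq_bigr=> k0 _.
rewrite [i == i0]eq_sym [k == k0]eq_sym.
by case: (i0 == i); case: (k0 == k); rewrite /= ?mul1r ?mul0r.
Qed.

Definition swapmx a b : 'M[C]_(2 ^ (b + a), 2 ^ (a + b)) :=
  \matrix_(r, c) (r == ti (unti c).2 (unti c).1)%:R.

Lemma swap_row a b (M : 'M[C]_(2 ^ (a + b), 2 ^ (a + b))) k i t :
  (swapmx a b *m M) (ti k i) t = M (ti i k) t.
Proof.
rewrite mxE sum_ti.
rewrite (eq_bigr (fun i0 => \sum_k0 ((i == i0) && (k == k0))%:R * M (ti i0 k0) t)).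
  by rewrite sum_ti_delta.
move=> i0 _; apply: eq_bigr=> k0 _; rewrite mxE unti_ti /= eq_ti.
by rewrite andbC.
Qed.

Lemma swap_col a b (M : 'M[C]_(2 ^ (b + a), 2 ^ (a + b))) r l j :
  (M *m mxadj (swapmx a b)) r (ti l j) = M r (ti j l).
Proof.
rewrite mxE sum_ti.
rewrite (eq_bigr (fun j0 => \sum_l0 ((j == j0) && (l == l0))%:R * M r (ti j0 l0))).
  by rewrite sum_ti_delta.
move=> j0 _; apply: eq_bigr=> l0 _; rewrite mxadjE mxE unti_ti /= eq_ti rmorph_nat.
by rewrite mulrC andbC.
Qed.

Lemma qswap_ad a b rho : @qswap C a b rho = swapmx a b *m rho *m mxadj (swapmx a b).
Proof.
move: rho; apply: lin_ext; [exact: lin_qswap|exact: lin_ad|] => A B.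
rewrite qswap_tens; apply/matrixP=> r s.
case: (tiP r)=> k i; case: (tiP s)=> l j.
by rewrite swap_col swap_row !tens_E mulrC.
Qed.


Record closedM (M : mor_pred C) : Prop := ClosedM {
  cl_comp : forall n m k (f : Mx n -> Mx m) (g : Mx m -> Mx k),
        M _ _ f -> M _ _ g -> M _ _ (fun x => g (f x));
  cl_tens : forall n1 m1 n2 m2 (f : Mx n1 -> Mx m1) (g : Mx n2 -> Mx m2),
        M _ _ f -> M _ _ g -> M _ _ (ttens f g);
  cl_id : forall n, M _ _ (@idfun (Mx n));
  cl_cast : forall n n' (e : n = n'), M _ _ (@qcast C n n' e);
  cl_swap : forall a b, M _ _ (@qswap C a b);
  cl_ext : forall n m (f g : Mx n -> Mx m), M _ _ f -> (forall x, f x = g x) -> M _ _ g }.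

Lemma pure_id n : pure (@idfun (Mx n)).
Proof. by exists 1%:M => rho; rewrite mxadj1 mul1mx mulmx1. Qed.

Lemma pure_qcast n n' (e : n = n') : pure (@qcast C n n' e).
Proof.
case: n' / e; exists 1%:M => rho.
by rewrite mxadj1 mul1mx mulmx1 /qcast castmx_id.
Qed.

Lemma pure_qswap a b : pure (@qswap C a b).
Proof. by exists (swapmx a b) => rho; rewrite qswap_ad. Qed.

Lemma closed_pure : closedM (fun n m f => @pure C n m f).
Proof.
split.
- move=> n m k f g [V eV] [W eW]; exists (W *m V) => rho.
  by rewrite eW eV mxadjM !mulmxA.
- move=> n1 m1 n2 m2 f g [V eV] [W eW]; exists (tensop V W) => rho.
  by rewrite (ttens_ext (f' := fun r => V *m r *m mxadj V) (g' := fun r => W *m r *m mxadj W))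
    // ttens_ad.
- by move=> n; apply: pure_id.
- by move=> n n' e; apply: pure_qcast.
- by move=> a b; apply: pure_qswap.
- by move=> n m f g [V eV] e; exists V => rho; rewrite -e.
Qed.

Lemma closed_CPM : closedM (@CPM C).
Proof.
split.
- move=> n m k f g /CPM_isKraus [I [K eK]] /CPM_isKraus [J [L eL]].
  apply/CPM_isKraus; exists _, (fun ij : I * J => L ij.2 *m K ij.1) => rho.
  by rewrite eK eL kraus_comp.
- move=> n1 m1 n2 m2 f g /CPM_isKraus [I [K eK]] /CPM_isKraus [J [L eL]].
  apply/CPM_isKraus; exists _, (fun p : I * J => tensop (K p.1) (L p.2)) => rho.
  by rewrite (ttens_ext (f' := kraus K) (g' := kraus L)) // ttens_kraus.
- by move=> n; apply/CPM_isKraus/pure_isKraus/pure_id.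
- by move=> n n' e; apply/CPM_isKraus/pure_isKraus/pure_qcast.
- by move=> a b; apply/CPM_isKraus/pure_isKraus/pure_qswap.
- by move=> n m f g hf e; apply: CPM_ext hf e.
Qed.

Lemma disc_tp n m (f : Mx n -> Mx m) :
  (forall rho, disc (f rho) = disc rho) <-> trace_preserving f.
Proof.
split=> h rho.
  by have := h rho; rewrite /disc => /matrixP/(_ 0 0); rewrite !mxE.
by rewrite /disc h.
Qed.

Lemma tp_ttens n1 m1 n2 m2 (f : Mx n1 -> Mx m1) (g : Mx n2 -> Mx m2) :
  linmap f -> linmap g -> trace_preserving f -> trace_preserving g ->
  trace_preserving (ttens f g).
Proof.
move=> lf lg tf tg; apply/disc_tp.
apply: lin_ext; [linT5|linT5|] => A B.
by rewrite ttens_tens // /disc !tr_tens tf tg.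
Qed.

Lemma closed_UCPM : closedM (@UCPM C).
Proof.
have [c1 c2 c3 c4 c5 c6] := closed_CPM.
split.
- move=> n m k f g [hf tf] [hg tg]; split; first exact: c1.
  by move=> rho; rewrite tg tf.
- move=> n1 m1 n2 m2 f g [hf tf] [hg tg]; split; first exact: c2.
  by apply: tp_ttens => //; [case: hf|case: hg].
- by move=> n; split.
- move=> n n' e; split=> // rho; exact: tr_castmx.
- by move=> a b; split=> // rho; apply: tr_qswap.
- move=> n m f g [hf tf] e; split; first exact: c6 hf e.
  by move=> rho; rewrite -e tf.
Qed.

Lemma closed_scp (M : mor_pred C) a1 b1 c a2 b2 x1 x2
  (p1 : Mx a1 -> Mx (b1 + c + x1)) (p2 : Mx (c + a2) -> Mx (b2 + x2)) :
  closedM M -> M _ _ p1 -> M _ _ p2 -> M _ _ (seq_comp_pur p1 p2).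
Proof.
case=> hc ht hi hq hs he h1 h2.
have m1 := ht _ _ _ _ _ _ h1 (hi a2).
have m2 := hc _ _ _ _ _ m1 (hq _ _ (esym (addnA (b1 + c) x1 a2))).
have m3 := hc _ _ _ _ _ m2 (ht _ _ _ _ _ _ (hi (b1 + c)) (hs x1 a2)).
have m4 := hc _ _ _ _ _ m3 (hq _ _ (eq_assoc1 b1 c a2 x1)).
have m5 := hc _ _ _ _ _ m4 (ht _ _ _ _ _ _ (ht _ _ _ _ _ _ (hi b1) h2) (hi x1)).
have m6 := hc _ _ _ _ _ m5 (hq _ _ (eq_assoc2 b1 b2 x2 x1)).
have m7 := hc _ _ _ _ _ m6 (ht _ _ _ _ _ _ (hi (b1 + b2)) (hs x2 x1)).
by apply: (he _ _ _ _ m7).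
Qed.

End Clo.


Section Main.
Variable C : numClosedFieldType.
Local Notation Mx n := 'M[C]_(2 ^ n).

Ltac linT6 := repeat first [ assumption | exact: lin_id | exact: lin_ttens | exact: lin_qcast
  | exact: lin_qswap | exact: lin_ptr | exact: lin_disc | exact: lin_kraus | exact: lin_ad
  | apply: lin_compF ].

Lemma tr_ptr b y (M : Mx (b + y)) : \tr (ptr M) = \tr M.
Proof.
by rewrite /mxtrace [RHS]sum_ti; apply: eq_bigr=> i _; rewrite ptr_E.
Qed.

Lemma causal_kraus n m (I : finType) (U : I -> 'M[C]_(2 ^ m, 2 ^ n)) :
  \sum_i mxadj (U i) *m U i = 1%:M -> causal (kraus U).
Proof. by move=> h; apply/disc_tp => rho; apply: tp_kraus. Qed.

Lemma purify a b (f : Mx a -> Mx b) :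
  CPM f -> exists V : 'M[C]_(2 ^ (b + (a + b)), 2 ^ a),
    forall rho, f rho = ptr (V *m rho *m mxadj V).
Proof.
case=> lf cf; have [K eK] := choi_kraus lf cf.
pose K' (z : 'I_(2 ^ (a + b))) := K (cast_ord (expnD 2 a b) z).
exists (\matrix_(r, c) K' (unti r).2 (unti r).1 c) => rho.
apply/matrixP=> i j; rewrite ptr_E eK /kraus entry_sum.
have hb : forall z, blk (\matrix_(r, c) K' (unti r).2 (unti r).1 c) z = K' z.
  by move=> z; apply/matrixP=> r c; rewrite !mxE unti_ti.
rewrite (eq_bigr (fun z => (K' z *m rho *m mxadj (K' z)) i j)); last first.
  by move=> z _; rewrite blk_prod !hb.
rewrite (reindex (cast_ord (expnD 2 a b))) //.
exists (cast_ord (esym (expnD 2 a b))) => z _; [exact: cast_ordK|exact: cast_ordKV].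
Qed.

Section Gen.
Variable M : mor_pred C.
Arguments M : clear implicits.
Hypothesis clM : closedM M.
Hypothesis subM : forall n m (f : Mx n -> Mx m), M _ _ f -> CPM f.
Hypothesis krM : forall n m (I : finType) (U : I -> 'M[C]_(2 ^ m, 2 ^ n)),
  \sum_i mxadj (U i) *m U i = 1%:M -> M _ _ (kraus U).
Hypothesis purM : forall a b x (f : Mx a -> Mx b) (V : 'M[C]_(2 ^ (b + x), 2 ^ a)),
  M _ _ f -> (forall rho, f rho = ptr (V *m rho *m mxadj V)) ->
  M _ _ (fun rho => V *m rho *m mxadj V).

Lemma gen_purif a b x (f : Mx a -> Mx b) (p : Mx a -> Mx (b + x)) :
  M _ _ p -> pure p -> (forall rho, f rho = ptr (p rho)) -> pseudo_pur M f p.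
Proof.
move=> Mp [V eV] hfp; split=> // y g Mg hfg.
have hyp : forall rho, ptr (g rho) = ptr (V *m rho *m mxadj V).
  by move=> rho; rewrite -hfg hfp eV.
have [I [U [hU eg]]] := pur_factor (subM Mg) hyp.
exists (kraus U); split; first exact: krM.
split; first exact: causal_kraus.
by move=> rho; rewrite eg eV.
Qed.

Lemma gen_purifications : purifications_pseudo M.
Proof. by move=> a b x f p _ Mp pp hfp; apply: gen_purif. Qed.

Lemma gen_exists a b (f : Mx a -> Mx b) : M _ _ f -> exists x (p : Mx a -> Mx (b + x)), pseudo_pur M f p.
Proof.
move=> Mf; have [V eV] := purify (subM Mf).
exists (a + b)%N, (fun rho => V *m rho *m mxadj V); apply: gen_purif => //.
  exact: purM Mf eV.
by exists V.
Qed.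

Lemma lin_of n m (f : Mx n -> Mx m) : M _ _ f -> linmap f.
Proof. by move/subM => [].  Qed.

Lemma gen_comp : pseudo_purifiable M.
Proof.
split; first by move=> a b f Mf; apply: gen_exists.
move=> a1 b1 c a2 b2 x1 x2 f1 f2 p1 p2 Mf1 Mf2 [Mp1 pp1] [Mp2 pp2].
split; first exact: closed_scp.
move=> y g Mg hg.
have [V1 eV1] := purify (subM Mf1).
have [V2 eV2] := purify (subM Mf2).
have MP1 := purM Mf1 eV1; have MP2 := purM Mf2 eV2.
have [d1 [Md1 [cd1 eP1]]] := pp1 _ _ MP1 eV1.
have [d2 [Md2 [cd2 eP2]]] := pp2 _ _ MP2 eV2.
pose Q := seq_comp_pur (fun rho => V1 *m rho *m mxadj V1) (fun rho => V2 *m rho *m mxadj V2).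
have MQ : M _ _ Q by apply: closed_scp.
have pQ : pure Q.
  apply: (closed_scp (M := fun n m f => @pure C n m f)); first exact: closed_pure.
    by exists V1.
  by exists V2.
have hQ : forall rho, seq_comp f1 f2 rho = ptr (Q rho).
  move=> rho; rewrite /Q ptr_seq_comp_pur; try linT6.
  by apply: seq_comp_ext.
have [cc [Mcc [ccc eg]]] := (gen_purif MQ pQ hQ).2 y g Mg hg.
have lp1 := lin_of Mp1; have lp2 := lin_of Mp2.
have ld1 := lin_of Md1; have ld2 := lin_of Md2; have lc := lin_of Mcc.
exists (fun x => cc (ttens d1 d2 x)); split.
  by apply: (cl_comp clM) => //; apply: (cl_tens clM).
split.
  move=> rho; rewrite ccc.
  have /disc_tp tp12 : trace_preserving (ttens d1 d2).
    by apply: tp_ttens => //; apply/disc_tp.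
  exact: tp12.
move=> rho; rewrite eg /Q.
rewrite (seq_comp_pur_ext (q1 := fun r => ttens (@idfun (Mx (b1 + c))) d1 (p1 r))
                         (q2 := fun r => ttens (@idfun (Mx b2)) d2 (p2 r))) //.
rewrite nat_seq_comp_pur // ttens_comp; try linT6.
by apply: ttens_ext.
Qed.

End Gen.

Lemma CPM_ad n m (V : 'M[C]_(2 ^ m, 2 ^ n)) : CPM (fun rho => V *m rho *m mxadj V).
Proof. by apply: (CPM_ext (CPM_kraus (fun _ : 'I_1 => V))) => x; rewrite kraus1. Qed.

Lemma main_CPM : pseudo_purifiable (@CPM C) /\ purifications_pseudo (@CPM C).
Proof.
have subM : forall n m (f : Mx n -> Mx m), CPM f -> CPM f by [].
have krM : forall n m (I : finType) (U : I -> 'M[C]_(2 ^ m, 2 ^ n)),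
  \sum_i mxadj (U i) *m U i = 1%:M -> CPM (kraus U) by move=> *; apply: CPM_kraus.
have purM : forall a b x (f : Mx a -> Mx b) (V : 'M[C]_(2 ^ (b + x), 2 ^ a)),
  CPM f -> (forall rho, f rho = ptr (V *m rho *m mxadj V)) ->
  CPM (fun rho => V *m rho *m mxadj V) by move=> *; apply: CPM_ad.
split; [exact: gen_comp (@closed_CPM C) subM krM purM|exact: gen_purifications subM krM].
Qed.

Lemma main_UCPM : pseudo_purifiable (@UCPM C) /\ purifications_pseudo (@UCPM C).
Proof.
have subM : forall n m (f : Mx n -> Mx m), UCPM f -> CPM f by move=> n m f [].
have krM : forall n m (I : finType) (U : I -> 'M[C]_(2 ^ m, 2 ^ n)),
  \sum_i mxadj (U i) *m U i = 1%:M -> UCPM (kraus U).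
  by move=> n m I U h; split; [apply: CPM_kraus|move=> rho; apply: tp_kraus].
have purM : forall a b x (f : Mx a -> Mx b) (V : 'M[C]_(2 ^ (b + x), 2 ^ a)),
  UCPM f -> (forall rho, f rho = ptr (V *m rho *m mxadj V)) ->
  UCPM (fun rho => V *m rho *m mxadj V).
  move=> a b x f V [_ tf] e; split; first exact: CPM_ad.
  by move=> rho; rewrite -tr_ptr -e tf.
split; [exact: gen_comp (@closed_UCPM C) subM krM purM|exact: gen_purifications subM krM].
Qed.

End Main.

Theorem lemma6 (R : realType) :
  (pseudo_purifiable (@CPM R[i]) /\ purifications_pseudo (@CPM R[i])) /\
  (pseudo_purifiable (@UCPM R[i]) /\ purifications_pseudo (@UCPM R[i])).
Proof. by split; [apply: main_CPM|apply: main_UCPM]. Qed.
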